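(* Let $\mathcal{A}$ and $\mathcal{B}$ be unital associative algebras. Then: (1) If $\rho: \mathcal{A} \to \mathcal{B}$ is a homomorphism, then $\rho * \rho^* : \mathcal{D}(\mathcal{A} ) \to \mathcal{D}(\mathcal{B})$ is a $*$-homomorphism, which is injective provided $\rho$ is injective. (2) If $\mathcal{A}$ is a subalgebra of an algebra $\mathcal{C}$, then $\mathcal{D}(\mathcal{A})$ is (canonically) a $*$-subalgebra of $\mathcal{D}(\mathcal{C})$. (3) If $\mathcal{A} = \mathbb{C} e \oplus \mathcal{A}_0$ is a vector space direct sum decomposition with $\mathcal{A}_0$ a subspace of $\mathcal{A}$, then $\mathcal{A}^* = \mathbb{C}e\oplus \mathcal{A}_0^*$ and, as a vector space, $$\mathcal{D}(\mathcal{A})=\mathbb{C}\oplus \mathcal{A}_0 \oplus \mathcal{A}_0^*\oplus (\mathcal{A}_0\otimes \mathcal{A}_0^* ) \oplus (\mathcal{A}_0^*\otimes \mathcal{A}_0) \oplus (\mathcal{A}_0 \otimes \mathcal{A}_0^* \otimes \mathcal{A}_0)\oplus (\mathcal{A}_0^* \otimes \mathcal{A}_0 \otimes \mathcal{A}_0^* )\oplus \cdots$$ (alternating tensor products). (4) $\mathcal{D}(\mathcal{A})$ is $*$-isomorphic to $\mathcal{D}(\mathcal{A}^* )$. (5) $\mathcal{D}(\mathcal{D}(\mathcal{A}))$ is $*$-isomorphic to $\mathcal{D}(\mathcal{A}) \star \mathcal{D}(\mathcal{A}^* )$.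
   Context: All algebras are complex and unital. For a unital associative algebra $\mathcal{A}$, $\mathcal{A}^*$ is an associative algebra with a fixed additive, conjugate-linear, anti-multiplicative bijection $\phi:\mathcal{A}\to\mathcal{A}^*$ ($\phi(ab)=\phi(b)\phi(a)$, $\phi(\lambda a)=\overline\lambda\phi(a)$); $\mathcal{A}_0^*=\phi(\mathcal{A}_0)$. The $*$-double $\mathcal{D}(\mathcal{A})$ is the unital free product $\mathcal{A}*\mathcal{A}^*$ of associative algebras with involution determined by $a^*=\phi(a)$ ($a\in\mathcal{A}$), $b^*=\phi^{-1}(b)$ ($b\in\mathcal{A}^*$). For a homomorphism $\rho:\mathcal{A}\to\mathcal{B}$, with fixed anti-isomorphism $\psi:\mathcal{B}\to\mathcal{B}^*$, $\rho*\rho^*:\mathcal{A}*\mathcal{A}^*\to\mathcal{B}*\mathcal{B}^*$ is the homomorphism equal to $\rho$ on $\mathcal{A}$ and to $\rho^*=\psi\circ\rho\circ\phi^{-1}$ on $\mathcal{A}^*$. In (5), $\mathcal{D}(\mathcal{A})$ and $\mathcal{D}(\mathcal{A}^* )$ are regarded as $*$-algebras, $\mathcal{D}(\mathcal{D}(\mathcal{A}))$ is the $*$-double of the underlying associative algebra of $\mathcal{D}(\mathcal{A})$, and $\star$ denotes the unital free product in the category of $*$-algebras. *)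

(* Defs.v *)
From mathcomp Require Import all_boot all_algebra complex Rstruct.

Set Implicit Arguments.
Unset Strict Implicit.
Unset Printing Implicit Defensive.

Import GRing.Theory Num.Theory.
Local Open Scope ring_scope.

Notation CC := (complex Rdefinitions.R).

Definition alg_hom (A B : algType CC) (f : A -> B) : Prop :=
  (forall (c : CC) (x y : A), f (c *: x + y) = c *: f x + f y) /\
  (forall x y : A, f (x * y) = f x * f y) /\
  f 1 = 1.

(* Additive, conjugate-linear, anti-multiplicative bijection
   (the fixed map phi : A -> A^* of the paper). *)
Definition anti_iso (A As : algType CC) (phi : A -> As) : Prop :=
  (forall x y : A, phi (x + y) = phi x + phi y) /\
  (forall (c : CC) (x : A), phi (c *: x) = c^* *: phi x) /\
  (forall x y : A, phi (x * y) = phi y * phi x) /\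
  bijective phi.

Definition star_involution (D : algType CC) (s : D -> D) : Prop :=
  (forall (c : CC) (x y : D), s (c *: x + y) = c^* *: s x + s y) /\
  (forall x y : D, s (x * y) = s y * s x) /\
  (forall x : D, s (s x) = x).

Definition star_hom (D1 D2 : algType CC) (s1 : D1 -> D1) (s2 : D2 -> D2)
  (f : D1 -> D2) : Prop :=
  alg_hom f /\ (forall x : D1, f (s1 x) = s2 (f x)).

Definition star_iso (D1 D2 : algType CC) (s1 : D1 -> D1) (s2 : D2 -> D2)
  (f : D1 -> D2) : Prop :=
  star_hom s1 s2 f /\ bijective f.

Definition is_free_product (A1 A2 F : algType CC)
  (i1 : A1 -> F) (i2 : A2 -> F) : Prop :=
  alg_hom i1 /\ alg_hom i2 /\
  forall (T : algType CC) (f1 : A1 -> T) (f2 : A2 -> T),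
    alg_hom f1 -> alg_hom f2 ->
    exists h : F -> T,
      (alg_hom h /\ (forall a, h (i1 a) = f1 a) /\ (forall b, h (i2 b) = f2 b)) /\
      (forall h' : F -> T,
         alg_hom h' -> (forall a, h' (i1 a) = f1 a) -> (forall b, h' (i2 b) = f2 b) ->
         forall x, h' x = h x).

Definition is_star_free_product (D1 D2 P : algType CC)
  (s1 : D1 -> D1) (s2 : D2 -> D2) (sP : P -> P)
  (p1 : D1 -> P) (p2 : D2 -> P) : Prop :=
  star_involution sP /\ star_hom s1 sP p1 /\ star_hom s2 sP p2 /\
  forall (T : algType CC) (sT : T -> T) (f1 : D1 -> T) (f2 : D2 -> T),
    star_involution sT -> star_hom s1 sT f1 -> star_hom s2 sT f2 ->
    exists h : P -> T,
      (star_hom sP sT h /\ (forall a, h (p1 a) = f1 a) /\ (forall b, h (p2 b) = f2 b)) /\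
      (forall h' : P -> T,
         star_hom sP sT h' -> (forall a, h' (p1 a) = f1 a) ->
         (forall b, h' (p2 b) = f2 b) ->
         forall x, h' x = h x).

(* (D, iA, iAs, s) is the *-double D(A) = A * A^* of A, where A^* = As comes
   with the fixed anti-isomorphism phi : A -> As; the involution s is
   determined by s a = phi a (a in A) and s b = phi^{-1} b (b in A^* ). *)
Definition is_star_double (A As : algType CC) (phi : A -> As)
  (D : algType CC) (iA : A -> D) (iAs : As -> D) (s : D -> D) : Prop :=
  is_free_product iA iAs /\ star_involution s /\
  (forall a : A, s (iA a) = iAs (phi a)) /\
  (forall a : A, s (iAs (phi a)) = iA a).

Definition linear_map (V W : lmodType CC) (f : V -> W) : Prop :=
  forall (c : CC) (x y : V), f (c *: x + y) = c *: f x + f y.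

Definition subspace (V : lmodType CC) (S : V -> Prop) : Prop :=
  S 0 /\ forall (c : CC) (x y : V), S x -> S y -> S (c *: x + y).

(* V = C e (+) S as a vector-space direct sum, with e = 1 the unit. *)
Definition unit_direct_sum (A : algType CC) (S : A -> Prop) : Prop :=
  subspace S /\
  (forall a : A, exists (c : CC) (a0 : A), S a0 /\ a = c *: 1 + a0) /\
  (forall (c : CC) (a0 : A), S a0 -> c *: 1 + a0 = 0 -> c = 0 /\ a0 = 0).

Definition image_sub (A As : algType CC) (phi : A -> As) (S : A -> Prop)
  : As -> Prop := fun b => exists a, S a /\ phi a = b.

Definition letter (A As : algType CC) (b : bool) : lmodType CC :=
  if b then (As : lmodType CC) else (A : lmodType CC).

Definition letter_sub (A As : algType CC) (phi : A -> As) (S : A -> Prop)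
  (b : bool) : letter A As b -> Prop :=
  match b as b0 return letter A As b0 -> Prop with
  | true => image_sub phi S
  | false => S
  end.

Definition letter_emb (A As D : algType CC) (iA : A -> D) (iAs : As -> D)
  (b : bool) : letter A As b -> D :=
  match b as b0 return letter A As b0 -> D with
  | true => iAs
  | false => iA
  end.

(* Alternating words of length n+1, starting with A (s = false) or with
   A^* (s = true): position i carries a letter of kind (s xor odd i). *)
Definition word (A As : algType CC) (s : bool) (n : nat) : Type :=
  forall i : 'I_n.+1, letter A As (xorb s (odd i)).

Definition admissible (A As : algType CC) (phi : A -> As) (S : A -> Prop)
  (s : bool) (n : nat) (x : word A As s n) : Prop :=
  forall i : 'I_n.+1, letter_sub phi S (x i).

Definition word_mul (A As D : algType CC) (iA : A -> D) (iAs : As -> D)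
  (s : bool) (n : nat) (x : word A As s n) : D :=
  \prod_(i < n.+1) letter_emb iA iAs (x i).

Definition multilinear_word (A As : algType CC) (phi : A -> As) (S : A -> Prop)
  (W : lmodType CC) (s : bool) (n : nat) (beta : word A As s n -> W) : Prop :=
  forall x : word A As s n, admissible phi S x ->
  forall (i : 'I_n.+1) (c : CC) (y z : letter A As (xorb s (odd i))),
    letter_sub phi S y -> letter_sub phi S z ->
    beta (dfwith x (c *: y + z)) = c *: beta (dfwith x y) + beta (dfwith x z).

(* "D = C (+) A_0 (+) A_0^* (+) (A_0 (x) A_0^* ) (+) (A_0^* (x) A_0) (+) ..."
   as vector spaces, via the canonical maps (1 and the multiplication maps on
   alternating words): this is the universal property of the direct sum of
   the alternating tensor products. *)
Definition alternating_tensor_decomposition (A As : algType CC) (phi : A -> As)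
  (S : A -> Prop) (D : algType CC) (iA : A -> D) (iAs : As -> D) : Prop :=
  forall (W : lmodType CC) (w0 : W)
         (beta : forall (s : bool) (n : nat), word A As s n -> W),
    (forall s n, multilinear_word phi S (beta s n)) ->
    exists L : D -> W,
      (linear_map L /\ L 1 = w0 /\
       (forall s n (x : word A As s n), admissible phi S x ->
          L (word_mul iA iAs x) = beta s n x)) /\
      (forall L' : D -> W,
         linear_map L' -> L' 1 = w0 ->
         (forall s n (x : word A As s n), admissible phi S x ->
            L' (word_mul iA iAs x) = beta s n x) ->
         forall d, L' d = L d).

(* Main.v *)
Require Import Defs.
From mathcomp Require Import all_boot all_algebra complex Rstruct.
From HB Require Import structures.
From mathcomp Require Import boolp classical_sets.
Require Import Defs.
Set Implicit Arguments. Unset Strict Implicit. Unset Printing Implicit Defensive.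
Import GRing.Theory Num.Theory.

Definition altb (s : seq bool) := sorted (fun a b : bool => a != b) s.

Lemma altb_cons b s : altb (b :: s) = altb s && (head (~~ b) s != b).
Proof.
case: s => [|c t] /=; first by case: b.
by rewrite /altb /= andbC eq_sym.
Qed.

Lemma altb_rcons s b : altb (rcons s b) = altb s && (last (~~ b) s != b).
Proof.
case: s => [|c t] /=; first by case: b.
by rewrite /altb /= rcons_path.
Qed.

Lemma altb_catl s1 s2 : altb (s1 ++ s2) -> altb s1.
Proof.
elim/last_ind: s2 => [|s2 b IH]; first by rewrite cats0.
by rewrite -rcons_cat altb_rcons => /andP[/IH].
Qed.

Lemma altb_catr s1 s2 : altb (s1 ++ s2) -> altb s2.
Proof.
elim: s1 => [|b s1 IH] //; rewrite cat_cons.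
by rewrite altb_cons => /andP[/IH].
Qed.

Definition splitlast (T : Type) (l : seq T) : option (seq T * T) :=
  if l is e :: t then Some (belast e t, last e t) else None.

Lemma splitlast_rcons (T : Type) (l : seq T) e : splitlast (rcons l e) = Some (l, e).
Proof. by case: l => [|h t] //=; rewrite belast_rcons last_rcons. Qed.


Local Open Scope ring_scope.

Section HomFacts.
Variables (A B : algType CC) (f : A -> B) (hf : alg_hom f).
Lemma ah_add x y : f (x + y) = f x + f y.
Proof. by have := hf.1 1 x y; rewrite !scale1r. Qed.
Lemma ah_0 : f 0 = 0.
Proof. have h := ah_add 0 0; rewrite addr0 in h. by apply: (addrI (f 0)); rewrite addr0 -h. Qed.
Lemma ah_scale c x : f (c *: x) = c *: f x.
Proof. by have := hf.1 c x 0; rewrite !addr0 ah_0 addr0. Qed.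
Lemma ah_mul x y : f (x * y) = f x * f y. Proof. exact: hf.2.1. Qed.
Lemma ah_1 : f 1 = 1. Proof. exact: hf.2.2. Qed.
Lemma ah_opp x : f (- x) = - f x.
Proof. by rewrite -scaleN1r ah_scale scaleN1r. Qed.
Lemma ah_sub x y : f (x - y) = f x - f y.
Proof. by rewrite ah_add ah_opp. Qed.
Lemma ah_prod (I : Type) (r : seq I) (F : I -> A) :
  f (\prod_(i <- r) F i) = \prod_(i <- r) f (F i).
Proof.
elim: r => [|i r IH]; first by rewrite !big_nil ah_1.
by rewrite !big_cons ah_mul IH.
Qed.
End HomFacts.

Lemma alg_hom_id (A : algType CC) : alg_hom (@id A).
Proof. by []. Qed.

Lemma alg_hom_comp (A B C : algType CC) (f : A -> B) (g : B -> C) :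
  alg_hom f -> alg_hom g -> alg_hom (g \o f).
Proof.
move=> hf hg; split; [|split].
- by move=> c x y /=; rewrite hf.1 hg.1.
- by move=> x y /=; rewrite (ah_mul hf) (ah_mul hg).
- by rewrite /= (ah_1 hf) (ah_1 hg).
Qed.

Definition anti_hom (A B : algType CC) (f : A -> B) : Prop :=
  (forall (c : CC) (x y : A), f (c *: x + y) = c^* *: f x + f y) /\
  (forall x y : A, f (x * y) = f y * f x).

Section AntiFacts.
Variables (A B : algType CC) (f : A -> B) (hf : anti_hom f).
Lemma an_add x y : f (x + y) = f x + f y.
Proof. have := hf.1 1 x y; rewrite !scale1r. by rewrite conjC1 scale1r. Qed.
Lemma an_0 : f 0 = 0.
Proof. have h := an_add 0 0; rewrite addr0 in h. by apply: (addrI (f 0)); rewrite addr0 -h. Qed.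
Lemma an_scale c x : f (c *: x) = c^* *: f x.
Proof. by have := hf.1 c x 0; rewrite !addr0 an_0 addr0. Qed.
Lemma an_mul x y : f (x * y) = f y * f x. Proof. exact: hf.2. Qed.
End AntiFacts.

Lemma anti_iso_anti (A B : algType CC) (f : A -> B) : anti_iso f -> anti_hom f.
Proof.
move=> [ha [hs [hm _]]]; split => // c x y; by rewrite ha hs.
Qed.

Lemma anti_comp_hom (A B C : algType CC) (f : A -> B) (g : B -> C) :
  anti_hom f -> anti_hom g -> alg_hom (g \o f) \/ True.
Proof. by right. Qed.

Lemma anti_anti (A B C : algType CC) (f : A -> B) (g : B -> C) :
  anti_hom f -> anti_hom g -> (g \o f) 1 = 1 -> alg_hom (g \o f).
Proof.
move=> hf hg h1; split; [|split] => //.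
- by move=> c x y /=; rewrite hf.1 hg.1 conjCK.
- by move=> x y /=; rewrite (an_mul hf) (an_mul hg).
Qed.

Lemma anti_hom_l (A B C : algType CC) (f : A -> B) (g : B -> C) :
  anti_hom f -> alg_hom g -> anti_hom (g \o f).
Proof.
move=> hf hg; split.
- by move=> c x y /=; rewrite hf.1 hg.1.
- by move=> x y /=; rewrite (an_mul hf) (ah_mul hg).
Qed.

Lemma anti_hom_r (A B C : algType CC) (f : A -> B) (g : B -> C) :
  alg_hom f -> anti_hom g -> anti_hom (g \o f).
Proof.
move=> hf hg; split.
- by move=> c x y /=; rewrite hf.1 hg.1.
- by move=> x y /=; rewrite (ah_mul hf) (an_mul hg).
Qed.

Lemma anti_surj_1 (A B : algType CC) (f : A -> B) :
  (forall x y, f (x * y) = f y * f x) -> (forall b, exists a, f a = b) -> f 1 = 1.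
Proof.
move=> hm hs.
have H : forall b, b * f 1 = b.
  by move=> b; case: (hs b) => a <-; rewrite -hm mul1r.
by rewrite -[f 1]mul1r H.
Qed.


Lemma bij_sig (A B : Type) (f : A -> B) : bijective f -> {g : B -> A | cancel f g /\ cancel g f}.
Proof. move=> hb; apply: cid; case: hb => g h1 h2; by exists g. Qed.

Definition inv_of (A B : Type) (f : A -> B) (hb : bijective f) : B -> A := sval (bij_sig hb).
Lemma inv_ofK (A B : Type) (f : A -> B) (hb : bijective f) : cancel f (inv_of hb).
Proof. exact: (proj1 (svalP (bij_sig hb))). Qed.
Lemma inv_ofKV (A B : Type) (f : A -> B) (hb : bijective f) : cancel (inv_of hb) f.
Proof. exact: (proj2 (svalP (bij_sig hb))). Qed.

Section AntiIso.
Variables (A B : algType CC) (phi : A -> B) (hphi : anti_iso phi).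
Definition ainv : B -> A := inv_of hphi.2.2.2.
Lemma ainvK : cancel phi ainv. Proof. exact: inv_ofK. Qed.
Lemma ainvKV : cancel ainv phi. Proof. exact: inv_ofKV. Qed.
Lemma phi_anti : anti_hom phi. Proof. exact: anti_iso_anti. Qed.
Lemma phi_inj : injective phi. Proof. exact: can_inj ainvK. Qed.
Lemma ainv_anti : anti_hom ainv.
Proof.
split.
- move=> c x y; apply: phi_inj; rewrite ainvKV phi_anti.1 conjCK !ainvKV //.
- by move=> x y; apply: phi_inj; rewrite ainvKV (an_mul phi_anti) !ainvKV.
Qed.
Lemma phi1 : phi 1 = 1.
Proof. apply: anti_surj_1; first exact: (an_mul phi_anti). by move=> b; exists (ainv b); rewrite ainvKV. Qed.
Lemma ainv1 : ainv 1 = 1.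
Proof. by apply: phi_inj; rewrite ainvKV phi1. Qed.
Lemma ainv_iso : anti_iso ainv.
Proof.
have h := ainv_anti; split; [exact: an_add h|split; [exact: an_scale h|split; [exact: an_mul h|]]].
exact: (Bijective ainvKV ainvK).
Qed.
End AntiIso.

Section StarFacts.
Variables (D : algType CC) (s : D -> D) (hs : star_involution s).
Lemma star_anti : anti_hom s.
Proof. by split; [exact: hs.1|exact: hs.2.1]. Qed.
Lemma starK : involutive s. Proof. exact: hs.2.2. Qed.
Lemma star1 : s 1 = 1.
Proof. apply: anti_surj_1; first exact: hs.2.1. by move=> b; exists (s b); rewrite starK. Qed.
End StarFacts.

Section FP.
Variables (A1 A2 F : algType CC) (i1 : A1 -> F) (i2 : A2 -> F).
Hypothesis hF : is_free_product i1 i2.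

Lemma fp_unique (T : algType CC) (g g' : F -> T) : alg_hom g -> alg_hom g' ->
  (forall a, g (i1 a) = g' (i1 a)) -> (forall b, g (i2 b) = g' (i2 b)) -> forall x, g x = g' x.
Proof.
move=> hg hg' e1 e2.
have [h [_ hu]] := hF.2.2 T (g \o i1) (g \o i2) (alg_hom_comp hF.1 hg) (alg_hom_comp hF.2.1 hg).
move=> x; rewrite (hu g hg) // (hu g' hg') //.
- by move=> a; rewrite -e1.
- by move=> b; rewrite -e2.
Qed.

Lemma fp_hom (T : algType CC) (f1 : A1 -> T) (f2 : A2 -> T) : alg_hom f1 -> alg_hom f2 ->
  exists h : F -> T, alg_hom h /\ (forall a, h (i1 a) = f1 a) /\ (forall b, h (i2 b) = f2 b).
Proof. by move=> h1 h2; have [h [H _]] := hF.2.2 T f1 f2 h1 h2; exists h. Qed.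
End FP.

Section SubAlg.
Variables (D : algType CC) (P : D -> Prop).
Hypotheses (P1 : P 1) (PD : forall c x y, P x -> P y -> P (c *: x + y))
  (PM : forall x y, P x -> P y -> P (x * y)).

Record subA := SubA { sv : D; svP : P sv }.
Lemma subA_ext (x y : subA) : sv x = sv y -> x = y.
Proof. case: x y => x xP [y yP] /= e; subst y; congr SubA; exact: Prop_irrelevance. Qed.

Lemma P0 : P 0.
Proof. have := PD (-1) P1 P1; by rewrite scaleN1r addNr. Qed.
Lemma Padd x y : P x -> P y -> P (x + y).
Proof. by move=> hx hy; have := PD 1 hx hy; rewrite scale1r. Qed.
Lemma Pscale c x : P x -> P (c *: x).
Proof. by move=> hx; have := PD c hx P0; rewrite addr0. Qed.

HB.instance Definition _ := gen_eqMixin subA.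
HB.instance Definition _ := gen_choiceMixin subA.
Definition s0 := SubA P0.
Definition sopp (x : subA) := SubA (Pscale (-1) (svP x)).
Definition sadd (x y : subA) := SubA (Padd (svP x) (svP y)).
Definition s1 := SubA P1.
Definition smul (x y : subA) := SubA (PM (svP x) (svP y)).
Definition sscale (c : CC) (x : subA) := SubA (Pscale c (svP x)).

Lemma saddA : associative sadd. Proof. by move=> x y z; apply: subA_ext; rewrite /= addrA. Qed.
Lemma saddC : commutative sadd. Proof. by move=> x y; apply: subA_ext; rewrite /= addrC. Qed.
Lemma sadd0 : left_id s0 sadd. Proof. by move=> x; apply: subA_ext; rewrite /= add0r. Qed.
Lemma saddN : left_inverse s0 sopp sadd. Proof. by move=> x; apply: subA_ext; rewrite /= scaleN1r addNr. Qed.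
HB.instance Definition _ := GRing.isZmodule.Build subA saddA saddC sadd0 saddN.
Lemma smulA : associative smul. Proof. by move=> x y z; apply: subA_ext; rewrite /= mulrA. Qed.
Lemma smul1 : left_id s1 smul. Proof. by move=> x; apply: subA_ext; rewrite /= mul1r. Qed.
Lemma smulr1 : right_id s1 smul. Proof. by move=> x; apply: subA_ext; rewrite /= mulr1. Qed.
Lemma smulDl : left_distributive smul +%R. Proof. by move=> x y z; apply: subA_ext; rewrite /= mulrDl. Qed.
Lemma smulDr : right_distributive smul +%R. Proof. by move=> x y z; apply: subA_ext; rewrite /= mulrDr. Qed.
Lemma s1_neq0 : s1 != 0.
Proof. apply/eqP => h; have := congr1 sv h; rewrite /= => /eqP; by rewrite oner_eq0. Qed.
HB.instance Definition _ := GRing.Zmodule_isNzRing.Build subA smulA smul1 smulr1 smulDl smulDr s1_neq0.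
Lemma sscaleA a b x : sscale a (sscale b x) = sscale (a * b) x.
Proof. by apply: subA_ext; rewrite /= scalerA. Qed.
Lemma sscale1 : left_id 1 sscale. Proof. by move=> x; apply: subA_ext; rewrite /= scale1r. Qed.
Lemma sscaleDr : right_distributive sscale +%R. Proof. by move=> a x y; apply: subA_ext; rewrite /= scalerDr. Qed.
Lemma sscaleDl x : {morph sscale^~ x : a b / a + b}. Proof. by move=> a b; apply: subA_ext; rewrite /= scalerDl. Qed.
HB.instance Definition _ := GRing.Zmodule_isLmodule.Build CC subA sscaleA sscale1 sscaleDr sscaleDl.
Lemma sscaleAl a (x y : subA) : a *: (x * y) = (a *: x) * y.
Proof. by apply: subA_ext; rewrite /= scalerAl. Qed.
HB.instance Definition _ := GRing.Lmodule_isLalgebra.Build CC subA sscaleAl.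
Lemma sscaleAr a (x y : subA) : a *: (x * y) = x * (a *: y).
Proof. by apply: subA_ext; rewrite /= scalerAr. Qed.
HB.instance Definition _ := GRing.Lalgebra_isAlgebra.Build CC subA sscaleAr.
Definition subA_alg : algType CC := subA.
Lemma sv_hom : alg_hom (sv : subA_alg -> D).
Proof. by split; [|split]. Qed.
End SubAlg.

Lemma fp_ind (A1 A2 F : algType CC) (i1 : A1 -> F) (i2 : A2 -> F) :
  is_free_product i1 i2 -> forall P : F -> Prop,
  P 1 -> (forall c x y, P x -> P y -> P (c *: x + y)) ->
  (forall x y, P x -> P y -> P (x * y)) ->
  (forall a, P (i1 a)) -> (forall b, P (i2 b)) -> forall x, P x.
Proof.
move=> hF P P1 PD PM H1 H2.
pose S := subA_alg P1 PD PM.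
pose f1 (a : A1) : S := SubA (H1 a).
pose f2 (b : A2) : S := SubA (H2 b).
have hf1 : alg_hom f1.
  split; [|split]; first by move=> c x y; apply: subA_ext; rewrite /= hF.1.1.
  by move=> x y; apply: subA_ext; rewrite /= (ah_mul hF.1).
  by apply: subA_ext; rewrite /= (ah_1 hF.1).
have hf2 : alg_hom f2.
  split; [|split]; first by move=> c x y; apply: subA_ext; rewrite /= hF.2.1.1.
  by move=> x y; apply: subA_ext; rewrite /= (ah_mul hF.2.1).
  by apply: subA_ext; rewrite /= (ah_1 hF.2.1).
have [h [hh [e1 e2]]] := fp_hom hF hf1 hf2.
have hc : alg_hom ((@sv F P : S -> F) \o h) by apply: alg_hom_comp => //; exact: sv_hom.
move=> x; have := @fp_unique _ _ _ _ _ hF _ _ _ hc (alg_hom_id F).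
move=> /(_ _ _ x) /= <-; first exact: svP.
- by move=> a; rewrite e1.
- by move=> b; rewrite e2.
Qed.

Section EndAlg.
Variable V : lmodType CC.
Variable hV : exists v : V, v != 0.

Record endo := Endo { ef : V -> V; efP : linear_map ef }.

Lemma endo_ext (f g : endo) : (forall v, ef f v = ef g v) -> f = g.
Proof.
case: f g => f fP [g gP] /= fg.
have e : f = g by apply: funext.
subst g; congr Endo; exact: Prop_irrelevance.
Qed.

Lemma lin_add (f : endo) x y : ef f (x + y) = ef f x + ef f y.
Proof. by have := efP f 1 x y; rewrite !scale1r. Qed.
Lemma lin_0 (f : endo) : ef f 0 = 0.
Proof. have h := lin_add f 0 0; rewrite addr0 in h. by apply: (addrI (ef f 0)); rewrite addr0 -h. Qed.
Lemma lin_scale (f : endo) c x : ef f (c *: x) = c *: ef f x.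
Proof. by have := efP f c x 0; rewrite !addr0 lin_0 addr0. Qed.

HB.instance Definition _ := gen_eqMixin endo.
HB.instance Definition _ := gen_choiceMixin endo.

Definition e0 : endo. exists (fun _ => 0). by move=> c x y; rewrite scaler0 addr0. Defined.
Definition eopp (f : endo) : endo. exists (fun v => - ef f v).
 by move=> c x y; rewrite efP opprD scalerN. Defined.
Definition eadd (f g : endo) : endo. exists (fun v => ef f v + ef g v).
 by move=> c x y; rewrite !efP scalerDr; rewrite !addrA; congr (_ + _); rewrite -!addrA; congr (_ + _); rewrite addrC. Defined.
Definition e1 : endo. exists id. by []. Defined.
Definition emul (f g : endo) : endo. exists (fun v => ef f (ef g v)).
 by move=> c x y; rewrite !efP. Defined.
Definition escale (c : CC) (f : endo) : endo. exists (fun v => c *: ef f v).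
 by move=> d x y; rewrite efP scalerDr !scalerA mulrC. Defined.

Lemma eaddA : associative eadd. Proof. by move=> f g h; apply: endo_ext => v /=; rewrite addrA. Qed.
Lemma eaddC : commutative eadd. Proof. by move=> f g; apply: endo_ext => v /=; rewrite addrC. Qed.
Lemma eadd0 : left_id e0 eadd. Proof. by move=> f; apply: endo_ext => v /=; rewrite add0r. Qed.
Lemma eaddN : left_inverse e0 eopp eadd. Proof. by move=> f; apply: endo_ext => v /=; rewrite addNr. Qed.
HB.instance Definition _ := GRing.isZmodule.Build endo eaddA eaddC eadd0 eaddN.

Lemma emulA : associative emul. Proof. by move=> f g h; apply: endo_ext. Qed.
Lemma emul1 : left_id e1 emul. Proof. by move=> f; apply: endo_ext. Qed.
Lemma emulr1 : right_id e1 emul. Proof. by move=> f; apply: endo_ext. Qed.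
Lemma emulDl : left_distributive emul +%R. Proof. by move=> f g h; apply: endo_ext. Qed.
Lemma emulDr : right_distributive emul +%R.
Proof. by move=> f g h; apply: endo_ext => v /=; rewrite lin_add. Qed.
Lemma e1_neq0 : e1 != 0.
Proof.
apply/eqP => h; case: hV => v; rewrite -[v]/(ef e1 v) h.
by rewrite [ef 0 v]/= eqxx.
Qed.
HB.instance Definition _ := GRing.Zmodule_isNzRing.Build endo emulA emul1 emulr1 emulDl emulDr e1_neq0.

Lemma escaleA a b f : escale a (escale b f) = escale (a * b) f.
Proof. by apply: endo_ext => v /=; rewrite scalerA. Qed.
Lemma escale1 : left_id 1 escale. Proof. by move=> f; apply: endo_ext => v /=; rewrite scale1r. Qed.
Lemma escaleDr : right_distributive escale +%R.
Proof. by move=> a f g; apply: endo_ext => v /=; rewrite scalerDr. Qed.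
Lemma escaleDl f : {morph escale^~ f : a b / a + b}.
Proof. by move=> a b; apply: endo_ext => v /=; rewrite scalerDl. Qed.
HB.instance Definition _ := GRing.Zmodule_isLmodule.Build CC endo escaleA escale1 escaleDr escaleDl.
Lemma escaleAl a (f g : endo) : a *: (f * g) = (a *: f) * g.
Proof. by apply: endo_ext. Qed.
HB.instance Definition _ := GRing.Lmodule_isLalgebra.Build CC endo escaleAl.
Lemma escaleAr a (f g : endo) : a *: (f * g) = f * (a *: g).
Proof. by apply: endo_ext => v /=; rewrite lin_scale. Qed.
HB.instance Definition _ := GRing.Lalgebra_isAlgebra.Build CC endo escaleAr.

Definition endo_alg : algType CC := endo.
Lemma endo_mulE (f g : endo_alg) v : ef (f * g) v = ef f (ef g v). Proof. by []. Qed.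
End EndAlg.

Section Decomp.
Variables (Z : algType CC) (S : Z -> Prop) (hS : unit_direct_sum S).

Lemma S0 : S 0. Proof. exact: hS.1.1. Qed.
Lemma SD c x y : S x -> S y -> S (c *: x + y). Proof. exact: hS.1.2. Qed.
Lemma Sadd x y : S x -> S y -> S (x + y).
Proof. by move=> hx hy; have := SD 1 hx hy; rewrite scale1r. Qed.
Lemma Sscale c x : S x -> S (c *: x).
Proof. by move=> hx; have := SD c hx S0; rewrite addr0. Qed.
Lemma Sopp x : S x -> S (- x).
Proof. by move=> hx; rewrite -scaleN1r; exact: Sscale. Qed.

Lemma dec_ex (x : Z) : {p : CC * Z | S p.2 /\ x = p.1 *: 1 + p.2}.
Proof. apply: cid; have [c [a0 [h1 h2]]] := hS.2.1 x; by exists (c, a0). Qed.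
Definition pr x := (sval (dec_ex x)).1.
Definition rest x := (sval (dec_ex x)).2.
Lemma restS x : S (rest x). Proof. exact: (proj1 (svalP (dec_ex x))). Qed.
Lemma decE x : x = pr x *: 1 + rest x. Proof. exact: (proj2 (svalP (dec_ex x))). Qed.

Lemma dec_uniq c1 a1 c2 a2 : S a1 -> S a2 -> c1 *: 1 + a1 = c2 *: 1 + a2 :> Z -> c1 = c2 /\ a1 = a2.
Proof.
move=> h1 h2 e.
have : (c1 - c2) *: 1 + (a1 - a2) = 0 :> Z.
  by rewrite scalerBl addrACA e addrACA !subrr addr0.
move=> /(hS.2.2 _ _ (Sadd h1 (Sopp h2))) [/eqP]; rewrite subr_eq0 => /eqP -> /eqP.
by rewrite subr_eq0 => /eqP ->.
Qed.

Lemma dec_char c a x : S a -> x = c *: 1 + a -> pr x = c /\ rest x = a.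
Proof. by move=> ha e; apply: dec_uniq (restS x) ha _; rewrite -decE. Qed.

Lemma prD c x y : pr (c *: x + y) = c * pr x + pr y.
Proof.
have := @dec_char (c * pr x + pr y) (c *: rest x + rest y) (c *: x + y) (SD _ (restS x) (restS y)).
case=> //.
by rewrite {1}(decE x) {1}(decE y) scalerDr scalerA scalerDl addrACA.
Qed.
Lemma restD c x y : rest (c *: x + y) = c *: rest x + rest y.
Proof.
have := @dec_char (c * pr x + pr y) (c *: rest x + rest y) (c *: x + y) (SD _ (restS x) (restS y)).
case=> //.
by rewrite {1}(decE x) {1}(decE y) scalerDr scalerA scalerDl addrACA.
Qed.
Lemma prS a : S a -> pr a = 0.
Proof. by move=> ha; case: (@dec_char 0 a a ha) => //; rewrite scale0r add0r. Qed.
Lemma restS_id a : S a -> rest a = a.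
Proof. by move=> ha; case: (@dec_char 0 a a ha) => //; rewrite scale0r add0r. Qed.
Lemma pr1 : pr 1 = 1.
Proof. by case: (@dec_char 1 0 1 S0) => //; rewrite scale1r addr0. Qed.
Lemma rest1 : rest 1 = 0.
Proof. by case: (@dec_char 1 0 1 S0) => //; rewrite scale1r addr0. Qed.
Lemma prZ c x : pr (c *: x) = c * pr x.
Proof. by have := prD c x 0; rewrite addr0 => ->; rewrite (prS S0) addr0. Qed.
Lemma restZ c x : rest (c *: x) = c *: rest x.
Proof. by have := restD c x 0; rewrite addr0 => ->; rewrite (restS_id S0) addr0. Qed.
Lemma prA x y : pr (x + y) = pr x + pr y.
Proof. by have := prD 1 x y; rewrite scale1r mul1r. Qed.
Lemma restA x y : rest (x + y) = rest x + rest y.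
Proof. by have := restD 1 x y; rewrite !scale1r. Qed.

(* product decomposition: a * b = (pr a) b + (rest a) b *)
Lemma pr_mul a b : pr (a * b) = pr a * pr b + pr (rest a * b).
Proof.
by rewrite {1}(decE a) mulrDl -scalerAl mul1r prA prZ.
Qed.
Lemma rest_mul a b : rest (a * b) = pr a *: rest b + rest (rest a * b).
Proof.
by rewrite {1}(decE a) mulrDl -scalerAl mul1r restA restZ.
Qed.
Lemma pr_mul_r a b : pr (a * b) = pr a * pr b + pr (a * rest b).
Proof.
by rewrite {1}(decE b) mulrDr -scalerAr mulr1 prA prZ mulrC.
Qed.
Lemma rest_mul_r a b : rest (a * b) = pr b *: rest a + rest (a * rest b).
Proof.
by rewrite {1}(decE b) mulrDr -scalerAr mulr1 restA restZ.
Qed.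
End Decomp.

Section Core.
Variables (X Y : algType CC) (SX : X -> Prop) (SY : Y -> Prop).
Hypotheses (hSX : unit_direct_sum SX) (hSY : unit_direct_sum SY).

Definition E := (X + Y)%type.
Definition kind (e : E) : bool := if e is inr _ then true else false.
Definition alt (l : seq E) := altb (map kind l).
Definition adm (e : E) : Prop := match e with inl x => SX x | inr y => SY y end.
Fixpoint alladm (l : seq E) : Prop := if l is e :: t then adm e /\ alladm t else True.
Definition good (l : seq E) : bool := alt l && `[< alladm l >].

Lemma alladm_cat l1 l2 : alladm (l1 ++ l2) <-> alladm l1 /\ alladm l2.
Proof. elim: l1 => [|e l1 IH] /=; first by tauto. by rewrite IH; tauto. Qed.
Lemma alladm_rcons l e : alladm (rcons l e) <-> alladm l /\ adm e.
Proof. by rewrite -cats1 alladm_cat /=; tauto. Qed.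

Lemma good_catl l1 l2 : good (l1 ++ l2) -> good l1.
Proof.
rewrite /good /alt map_cat => /andP[/altb_catl -> /asboolP /alladm_cat [h _]].
by apply/asboolP.
Qed.

Variable W : lmodType CC.

Definition MLk (Z : algType CC) (S : Z -> Prop) (inj : Z -> E) (F : seq E -> W) :=
  forall l1 l2 c y z, S y -> S z ->
    F (l1 ++ inj (c *: y + z) :: l2) = c *: F (l1 ++ inj y :: l2) + F (l1 ++ inj z :: l2).
Definition Zgood (F : seq E -> W) := forall l, ~~ good l -> F l = 0.
Definition ML (F : seq E -> W) := [/\ MLk SX inl F, MLk SY inr F & Zgood F].

Section MLfacts.
Variables (Z : algType CC) (S : Z -> Prop) (hS : unit_direct_sum S) (inj : Z -> E) (F : seq E -> W).
Hypothesis hF : MLk S inj F.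
Lemma ML0 l1 l2 : F (l1 ++ inj 0 :: l2) = 0.
Proof.
have := hF l1 l2 1 (S0 hS) (S0 hS); rewrite !scale1r addr0.
move=> h; apply: (addrI (F (l1 ++ inj 0 :: l2))); by rewrite addr0 -h.
Qed.
Lemma MLadd l1 l2 y z : S y -> S z -> F (l1 ++ inj (y + z) :: l2) = F (l1 ++ inj y :: l2) + F (l1 ++ inj z :: l2).
Proof. by move=> hy hz; have := hF l1 l2 1 hy hz; rewrite !scale1r. Qed.
Lemma MLscale l1 l2 c y : S y -> F (l1 ++ inj (c *: y) :: l2) = c *: F (l1 ++ inj y :: l2).
Proof. by move=> hy; have := hF l1 l2 c hy (S0 hS); rewrite !addr0 ML0 addr0. Qed.
Lemma MLr l c y z : S y -> S z -> F (rcons l (inj (c *: y + z))) = c *: F (rcons l (inj y)) + F (rcons l (inj z)).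
Proof. by rewrite -!cats1; exact: hF. Qed.
End MLfacts.

Section Act.
Variables (Z : algType CC) (S : Z -> Prop) (hS : unit_direct_sum S) (k : bool)
  (inj : Z -> E) (proj : E -> option Z).
Hypotheses (projK : forall z, proj (inj z) = Some z)
  (projS : forall e z, proj e = Some z -> e = inj z)
  (projN : forall e, proj e = None -> kind e = ~~ k)
  (kinj : forall z, kind (inj z) = k)
  (admI : forall z, adm (inj z) <-> S z).
Variables (Z' : algType CC) (S' : Z' -> Prop) (inj' : Z' -> E).
Hypotheses (kinj' : forall z, kind (inj' z) = ~~ k) (admI' : forall z, adm (inj' z) <-> S' z).

Local Notation pr := (pr hS).
Local Notation rest := (rest hS).

Definition act (a : Z) (F : seq E -> W) (l : seq E) : W :=
  if good l then
   match splitlast l with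
   | Some (l', e) => match proj e with
        | Some x => pr (x * a) *: F l' + F (rcons l' (inj (rest (x * a))))
        | None => pr a *: F l + F (rcons l (inj (rest a))) end
   | None => pr a *: F l + F (rcons l (inj (rest a)))
   end
  else 0.

Definition ends_other (l : seq E) := forall l'' e, l = rcons l'' e -> proj e = None.

Lemma act_ngood a F l : ~~ good l -> act a F l = 0.
Proof. by rewrite /act => /negbTE ->. Qed.

Lemma act_open a F l : good l -> ends_other l ->
  act a F l = pr a *: F l + F (rcons l (inj (rest a))).
Proof.
rewrite /act => -> ho; case/lastP: l ho => [|l e] ho //.
by rewrite splitlast_rcons (ho l e).
Qed.

Lemma act_own a F l x : good (rcons l (inj x)) ->
  act a F (rcons l (inj x)) = pr (x * a) *: F l + F (rcons l (inj (rest (x * a)))).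
Proof. by rewrite /act => ->; rewrite splitlast_rcons projK. Qed.

Lemma proj_other e : kind e = ~~ k -> proj e = None.
Proof.
move=> he; case E1: (proj e) => [z|] //.
by move: he; rewrite (projS E1) kinj; case: k.
Qed.

Lemma good_rcons_inj l x : good (rcons l (inj x)) -> good l /\ ends_other l /\ S x.
Proof.
rewrite /good /alt map_rcons altb_rcons => /andP[/andP[ha hl] /asboolP /alladm_rcons [h1 h2]].
split; first by rewrite ha; apply/asboolP.
split; last exact/admI.
move=> l'' e el; apply: proj_other; move: hl; rewrite el map_rcons last_rcons kinj.
by case: (kind e); case: k.
Qed.

Lemma good_rcons_inj' l x : good l -> ends_other l -> S x -> good (rcons l (inj x)).
Proof.
move=> /andP[ha /asboolP hadm] ho hx; rewrite /good /alt map_rcons altb_rcons; rewrite /alt in ha.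
apply/andP; split; last by apply/asboolP/alladm_rcons; split => //; exact/admI.
rewrite ha /=; case/lastP: l ho {ha hadm} => [|l e] ho; first by rewrite /= kinj; case: k.
rewrite map_rcons last_rcons kinj; have := projN (ho l e erefl).
by move=> ->; case: k.
Qed.

Lemma good_ends l x : good (rcons l (inj x)) -> ends_other l.
Proof. by case/good_rcons_inj => _ []. Qed.

Lemma good_slot (Z'' : algType CC) (S'' : Z'' -> Prop) (inj'' : Z'' -> E)
  (kc : forall z z', kind (inj'' z) = kind (inj'' z')) (ad : forall z, adm (inj'' z) <-> S'' z)
  l1 l2 y y' : S'' y -> S'' y' -> good (l1 ++ inj'' y :: l2) = good (l1 ++ inj'' y' :: l2).
Proof.
move=> hy hy'; rewrite /good /alt !map_cat /= (kc y y'); congr (_ && _).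
apply: asbool_equiv_eq; rewrite !alladm_cat /= !ad; tauto.
Qed.

Lemma ends_other_rcons l e : proj e = None -> ends_other (rcons l e).
Proof. by move=> he l'' e' /rcons_inj [_ <-]. Qed.

Lemma lincomb (c p1 p2 : CC) (u1 v1 v2 : W) :
  (c * p1 + p2) *: u1 + (c *: v1 + v2) = c *: (p1 *: u1 + v1) + (p2 *: u1 + v2).
Proof. by rewrite scalerDl scalerDr -scalerA addrACA. Qed.

Lemma lincomb2 (c p : CC) (u1 u2 w1 w2 : W) :
  p *: (c *: u1 + u2) + (c *: w1 + w2) = c *: (p *: u1 + w1) + (p *: u2 + w2).
Proof. by rewrite scalerDr !scalerA mulrC -scalerA addrACA scalerDr. Qed.

Lemma act_ML_far (Z'' : algType CC) (S'' : Z'' -> Prop) (inj'' : Z'' -> E)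
  (kc : forall z z', kind (inj'' z) = kind (inj'' z')) (ad : forall z, adm (inj'' z) <-> S'' z)
  (sub : subspace S'')
  a F : MLk S'' inj'' F -> forall l1 l2' e c y z, S'' y -> S'' z ->
  act a F (l1 ++ inj'' (c *: y + z) :: rcons l2' e)
  = c *: act a F (l1 ++ inj'' y :: rcons l2' e) + act a F (l1 ++ inj'' z :: rcons l2' e).
Proof.
move=> hF l1 l2' e c y z hy hz.
have hw : S'' (c *: y + z) by exact: sub.2.
have eq1 v : l1 ++ inj'' v :: rcons l2' e = rcons (l1 ++ inj'' v :: l2') e by rewrite rcons_cat.
have g1 := good_slot kc ad l1 (rcons l2' e) hw hy.
have g2 := good_slot kc ad l1 (rcons l2' e) hz hy.
case G: (good (l1 ++ inj'' y :: rcons l2' e)); last first.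
  by rewrite !act_ngood ?g1 ?g2 ?G // scaler0 addr0.
case E1: (proj e) => [x|].
  have ex := projS E1; subst e.
  rewrite !eq1 !act_own -?eq1 ?g1 ?g2 ?G //.
  have eq2 v r : rcons (l1 ++ inj'' v :: l2') r = l1 ++ inj'' v :: rcons l2' r by rewrite rcons_cat.
  rewrite !eq2 (hF l1) // (hF l1) //; exact: lincomb2.
have eq2 v r : rcons (rcons (l1 ++ inj'' v :: l2') e) r = l1 ++ inj'' v :: rcons (rcons l2' e) r by rewrite !rcons_cat.
rewrite !eq1 !act_open; first (rewrite !eq2 -!eq1 (hF l1) // (hF l1) //; exact: lincomb2).
all: try (rewrite -?eq1 ?g1 ?g2 ?G //; fail); by move=> l0 e0 /rcons_inj [_ <-].
Qed.

Hypothesis hS' : subspace S'.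

Lemma kc_inj z z' : kind (inj z) = kind (inj z'). Proof. by rewrite !kinj. Qed.
Lemma kc_inj' z z' : kind (inj' z) = kind (inj' z'). Proof. by rewrite !kinj'. Qed.

Lemma act_ML_own_last a F : MLk S inj F -> forall l1 c y z, S y -> S z ->
  act a F (rcons l1 (inj (c *: y + z)))
  = c *: act a F (rcons l1 (inj y)) + act a F (rcons l1 (inj z)).
Proof.
move=> hF l1 c y z hy hz.
have hw : S (c *: y + z) by exact: hS.1.2.
have g1 := good_slot kc_inj admI l1 [::] hw hy.
have g2 := good_slot kc_inj admI l1 [::] hz hy.
rewrite !cats1 in g1 g2.
case G: (good (rcons l1 (inj y))); last first.
  by rewrite !act_ngood ?g1 ?g2 ?G // scaler0 addr0.
rewrite !act_own ?g1 ?g2 ?G //.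
rewrite mulrDl -scalerAl prD restD (MLr hF) ?restS //; [exact: lincomb|exact: restS..].
Qed.

Lemma act_ML_other_last a F : MLk S' inj' F -> forall l1 c y z, S' y -> S' z ->
  act a F (rcons l1 (inj' (c *: y + z)))
  = c *: act a F (rcons l1 (inj' y)) + act a F (rcons l1 (inj' z)).
Proof.
move=> hF l1 c y z hy hz.
have hw : S' (c *: y + z) by exact: hS'.2.
have g1 := good_slot kc_inj' admI' l1 [::] hw hy.
have g2 := good_slot kc_inj' admI' l1 [::] hz hy.
rewrite !cats1 in g1 g2.
have po v : proj (inj' v) = None by apply: proj_other; rewrite kinj'.
case G: (good (rcons l1 (inj' y))); last first.
  by rewrite !act_ngood ?g1 ?g2 ?G // scaler0 addr0.
rewrite !act_open ?g1 ?g2 ?G //; try exact: ends_other_rcons.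
have eq2 v r : rcons (rcons l1 (inj' v)) r = l1 ++ inj' v :: [:: r] by rewrite -!cats1 -catA.
rewrite !eq2 (MLr hF) // (hF l1) //; exact: lincomb2.
Qed.

Lemma act_ML a F : MLk S inj F -> MLk S' inj' F -> Zgood F ->
  [/\ MLk S inj (act a F), MLk S' inj' (act a F) & Zgood (act a F)].
Proof.
move=> h1 h2 h3; split.
- move=> l1 l2 c y z hy hz; case/lastP: l2 => [|l2 e].
    by rewrite !cats1; exact: act_ML_own_last.
  exact: (act_ML_far kc_inj admI hS.1).
- move=> l1 l2 c y z hy hz; case/lastP: l2 => [|l2 e].
    by rewrite !cats1; exact: act_ML_other_last.
  exact: (act_ML_far kc_inj' admI' hS').
- by move=> l hl; rewrite act_ngood.
Qed.

Lemma ends_other_nil : ends_other [::].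
Proof. by move=> l'' e /(congr1 size); rewrite size_rcons. Qed.

Lemma act_linA c a b F : MLk S inj F -> forall l,
  act (c *: a + b) F l = c *: act a F l + act b F l.
Proof.
move=> hF l; case G: (good l); last by rewrite !act_ngood ?G // scaler0 addr0.
case/lastP: l G => [|l e] G.
  rewrite !act_open //; try exact: ends_other_nil.
  rewrite prD restD (MLr hF); [exact: lincomb|exact: restS..].
case E1: (proj e) => [x|].
  have ex := projS E1; subst e.
  rewrite !act_own // mulrDr -scalerAr prD restD (MLr hF); [exact: lincomb|exact: restS..].
rewrite !act_open //; try exact: ends_other_rcons.
rewrite prD restD (MLr hF); [exact: lincomb|exact: restS..].
Qed.

Lemma act_key a b F L : MLk S inj F -> good L -> ends_other L ->
  pr (a * b) *: F L + F (rcons L (inj (rest (a * b))))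
  = pr a *: act b F L + act b F (rcons L (inj (rest a))).
Proof.
move=> hF gL oL.
rewrite act_open // act_own; last by apply: good_rcons_inj' => //; exact: restS.
rewrite pr_mul rest_mul (MLr hF); [exact: lincomb|exact: restS..].
Qed.

Lemma act_mul a b F : MLk S inj F -> forall l, act (a * b) F l = act a (act b F) l.
Proof.
move=> hF l; case G: (good l); last by rewrite !act_ngood ?G.
case/lastP: l G => [|l e] G.
  by rewrite (act_open (a * b) F) ?(act_open a (act b F)) //; (try apply: act_key) => //; exact: ends_other_nil.
case E1: (proj e) => [x|].
  have ex := projS E1; subst e.
  have [gl [ol _]] := good_rcons_inj G.
  by rewrite (act_own (a * b) F) ?(act_own a (act b F)) // mulrA act_key.
have oL : ends_other (rcons l e) by move=> l0 e0 /rcons_inj [_ <-].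
by rewrite (act_open (a * b) F) ?(act_open a (act b F)) // act_key.
Qed.

Lemma act_one F : MLk S inj F -> Zgood F -> forall l, act 1 F l = F l.
Proof.
move=> hF hZ l; case G: (good l); last by rewrite act_ngood ?G // hZ ?G.
case/lastP: l G => [|l e] G.
  rewrite act_open //; last exact: ends_other_nil.
  by rewrite pr1 rest1 /= (ML0 hS hF [::] [::]) addr0 scale1r.
case E1: (proj e) => [x|].
  have ex := projS E1; subst e.
  have [gl [ol hx]] := good_rcons_inj G.
  by rewrite act_own // mulr1 (prS hS hx) (restS_id hS hx) scale0r add0r.
rewrite act_open //; last by move=> l0 e0 /rcons_inj [_ <-].
by rewrite pr1 rest1 -[rcons (rcons l e) _]cats1 (ML0 hS hF) addr0 scale1r.
Qed.

Lemma act_snoc a F l : good (rcons l (inj a)) -> act a F l = F (rcons l (inj a)).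
Proof.
case/good_rcons_inj => gl [ol ha].
by rewrite act_open // (prS hS ha) (restS_id hS ha) scale0r add0r.
Qed.

Lemma act_linF a c F G l : act a (fun m => c *: F m + G m) l = c *: act a F l + act a G l.
Proof.
case H: (good l); last by rewrite !act_ngood ?H // scaler0 addr0.
rewrite /act H; case: (splitlast l) => [[l' e]|]; first case: (proj e) => [x|].
all: by rewrite !scalerDr !scalerA mulrC -!scalerA addrACA.
Qed.
End Act.

Definition projX (e : E) : option X := if e is inl x then Some x else None.
Definition projY (e : E) : option Y := if e is inr y then Some y else None.
Lemma projXK z : projX (inl z) = Some z. Proof. by []. Qed.
Lemma projYK z : projY (inr z) = Some z. Proof. by []. Qed.
Lemma projXS e z : projX e = Some z -> e = inl z. Proof. by case: e => //= x [->]. Qed.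
Lemma projYS e z : projY e = Some z -> e = inr z. Proof. by case: e => //= x [->]. Qed.
Lemma projXN e : projX e = None -> kind e = ~~ false. Proof. by case: e. Qed.
Lemma projYN e : projY e = None -> kind e = ~~ true. Proof. by case: e. Qed.
Lemma kinjX (z : X) : kind (inl z) = false. Proof. by []. Qed.
Lemma kinjY (z : Y) : kind (inr z) = true. Proof. by []. Qed.
Lemma kinjX' (z : X) : kind (inl z) = ~~ true. Proof. by []. Qed.
Lemma kinjY' (z : Y) : kind (inr z) = ~~ false. Proof. by []. Qed.
Lemma admX (z : X) : adm (inl z) <-> SX z. Proof. by []. Qed.
Lemma admY (z : Y) : adm (inr z) <-> SY z. Proof. by []. Qed.

Definition actX (a : X) F := act hSX inl projX a F.
Definition actY (a : Y) F := act hSY inr projY a F.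

Lemma actX_ML a F : ML F -> ML (actX a F).
Proof.
case=> h1 h2 h3; have := act_ML hSX projXK projXS kinjX admX kinjY' admY hSY.1 a h1 h2 h3.
by case.
Qed.
Lemma actY_ML a F : ML F -> ML (actY a F).
Proof.
case=> h1 h2 h3; have := act_ML hSY projYK projYS kinjY admY kinjX' admX hSX.1 a h2 h1 h3.
by case.
Qed.

Record fam := Fam { ff :> seq E -> W; ffP : ML ff }.
Lemma fam_ext (F G : fam) : (forall l, F l = G l) -> F = G.
Proof.
case: F G => f fP [g gP] /= fg; have e : f = g by apply: funext.
subst g; congr Fam; exact: Prop_irrelevance.
Qed.

Lemma MLk_comb (Z : algType CC) (S : Z -> Prop) (inj : Z -> E) c (F G : seq E -> W) :
  MLk S inj F -> MLk S inj G -> MLk S inj (fun l => c *: F l + G l).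
Proof.
move=> hF hG l1 l2 d y z hy hz; rewrite hF // hG //.
by rewrite scalerDr !scalerA mulrC -scalerA addrACA scalerDr.
Qed.
Lemma ML_comb c (F G : seq E -> W) : ML F -> ML G -> ML (fun l => c *: F l + G l).
Proof.
case=> f1 f2 f3 [g1 g2 g3]; split; try exact: MLk_comb.
by move=> l hl; rewrite f3 // g3 // scaler0 addr0.
Qed.
Lemma ML_zero : ML (fun _ => 0).
Proof. by split => // l1 l2 c y z _ _; rewrite scaler0 addr0. Qed.

HB.instance Definition _ := gen_eqMixin fam.
HB.instance Definition _ := gen_choiceMixin fam.
Definition f0 := Fam ML_zero.
Definition fadd (F G : fam) := Fam (ML_comb 1 (ffP F) (ffP G)).
Definition fscale c (F : fam) := Fam (ML_comb c (ffP F) ML_zero).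
Definition fopp (F : fam) := fscale (-1) F.
Lemma faddA : associative fadd. Proof. by move=> f g h; apply: fam_ext => l /=; rewrite !scale1r addrA. Qed.
Lemma faddC : commutative fadd. Proof. by move=> f g; apply: fam_ext => l /=; rewrite !scale1r addrC. Qed.
Lemma fadd0 : left_id f0 fadd. Proof. by move=> f; apply: fam_ext => l /=; rewrite !scale1r add0r. Qed.
Lemma faddN : left_inverse f0 fopp fadd.
Proof. by move=> f; apply: fam_ext => l /=; rewrite scale1r addr0 scaleN1r addNr. Qed.
HB.instance Definition _ := GRing.isZmodule.Build fam faddA faddC fadd0 faddN.
Lemma fscaleA a b f : fscale a (fscale b f) = fscale (a * b) f.
Proof. by apply: fam_ext => l /=; rewrite !addr0 scalerA. Qed.
Lemma fscale1 : left_id 1 fscale. Proof. by move=> f; apply: fam_ext => l /=; rewrite addr0 scale1r. Qed.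
Lemma fscaleDr : right_distributive fscale +%R.
Proof. by move=> a f g; apply: fam_ext => l /=; rewrite !addr0 !scale1r scalerDr. Qed.
Lemma fscaleDl f : {morph fscale^~ f : a b / a + b}.
Proof. by move=> a b; apply: fam_ext => l /=; rewrite !addr0 !scale1r scalerDl. Qed.
HB.instance Definition _ := GRing.Zmodule_isLmodule.Build CC fam fscaleA fscale1 fscaleDr fscaleDl.

Lemma famD (F G : fam) l : (F + G) l = F l + G l.
Proof. by rewrite /= scale1r. Qed.
Lemma famZ c (F : fam) l : (c *: F) l = c *: F l.
Proof. by rewrite /= addr0. Qed.

Variables (D : algType CC) (iX : X -> D) (iY : Y -> D).
Hypothesis hF : is_free_product iX iY.

Definition emb (e : E) : D := match e with inl x => iX x | inr y => iY y end.
Definition lmul (l : seq E) : D := \prod_(e <- l) emb e.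

Lemma good_nil : good [::].
Proof. by rewrite /good /alt /=; apply/asboolP. Qed.

Section Exist.
Hypothesis hW : exists w : W, w != 0.

Lemma fam_nz : exists F : fam, F != 0.
Proof.
case: hW => w hw.
have hM : ML (fun l : seq E => if l is [::] then w else 0).
  split; try by move=> l1 l2 c y z _ _; case: l1 => [|? ?] /=; rewrite scaler0 addr0.
  by move=> [|? ?] //; rewrite good_nil.
exists (Fam hM); apply/eqP => /(congr1 (fun F : fam => ff F [::])) /= h.
by move: hw; rewrite h eqxx.
Qed.

Definition EF := endo_alg fam_nz.

Lemma actX_lin a : linear_map (fun F : fam => Fam (actX_ML a (ffP F))).
Proof.
move=> c F G; apply: fam_ext => l /=.
rewrite scale1r addr0 -(act_linF hSX inl projX a c F G l) /=.
by congr act; apply: funext => m; rewrite scale1r addr0.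
Qed.
Lemma actY_lin a : linear_map (fun F : fam => Fam (actY_ML a (ffP F))).
Proof.
move=> c F G; apply: fam_ext => l /=.
rewrite scale1r addr0 -(act_linF hSY inr projY a c F G l) /=.
by congr act; apply: funext => m; rewrite scale1r addr0.
Qed.

Definition rhoX (a : X) : EF := Endo (actX_lin a).
Definition rhoY (a : Y) : EF := Endo (actY_lin a).

Lemma rhoX_hom : alg_hom rhoX.
Proof.
split; [|split].
- move=> c a b; apply: endo_ext => F; apply: fam_ext => l /=.
  rewrite scale1r addr0 /actX (act_linA hSX projXK projXS) //.
  by case: (ffP F).
- move=> a b; apply: endo_ext => F; apply: fam_ext => l /=.
  rewrite /actX (act_mul hSX projXK projXS projXN kinjX admX) //.
  by case: (ffP F).
- apply: endo_ext => F; apply: fam_ext => l /=.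
  by case: (ffP F) => h1 h2 h3; rewrite /actX (act_one hSX projXK projXS kinjX admX).
Qed.
Lemma rhoY_hom : alg_hom rhoY.
Proof.
split; [|split].
- move=> c a b; apply: endo_ext => F; apply: fam_ext => l /=.
  rewrite scale1r addr0 /actY (act_linA hSY projYK projYS) //.
  by case: (ffP F).
- move=> a b; apply: endo_ext => F; apply: fam_ext => l /=.
  rewrite /actY (act_mul hSY projYK projYS projYN kinjY admY) //.
  by case: (ffP F).
- apply: endo_ext => F; apply: fam_ext => l /=.
  by case: (ffP F) => h1 h2 h3; rewrite /actY (act_one hSY projYK projYS kinjY admY).
Qed.

Lemma existence (F0 : fam) : exists L : D -> W, linear_map L /\
  forall m, good m -> L (lmul m) = F0 m.
Proof.
have [h [hh [e1 e2]]] := fp_hom hF rhoX_hom rhoY_hom.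
exists (fun d => ff (ef (h d) F0) [::]); split.
  by move=> c x y; rewrite hh.1 /= scale1r addr0.
have key : forall m (G : fam) l, good (l ++ m) -> ff (ef (h (lmul m)) G) l = G (l ++ m).
  elim=> [|e m IH] G l gl.
    by rewrite /lmul big_nil (ah_1 hh) cats0.
  rewrite /lmul big_cons (ah_mul hh) endo_mulE.
  have gr : good (rcons l e) by apply: (@good_catl _ m); rewrite cat_rcons.
  case: e gl gr => [x|y] gl gr.
  - rewrite e1 /= /actX (act_snoc hSX projXS kinjX admX) //.
    by rewrite IH cat_rcons.
  - rewrite e2 /= /actY (act_snoc hSY projYS kinjY admY) //.
    by rewrite IH cat_rcons.
by move=> m gm; rewrite key.
Qed.
End Exist.

Section LinFacts.
Variables (U V : lmodType CC) (f : U -> V) (hf : linear_map f).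
Lemma lm_add x y : f (x + y) = f x + f y.
Proof. by have := hf 1 x y; rewrite !scale1r. Qed.
Lemma lm_0 : f 0 = 0.
Proof. have h := lm_add 0 0; rewrite addr0 in h. by apply: (addrI (f 0)); rewrite addr0 -h. Qed.
Lemma lm_scale c x : f (c *: x) = c *: f x.
Proof. by have := hf c x 0; rewrite !addr0 lm_0 addr0. Qed.
End LinFacts.

Definition Sp (d : D) : Prop := forall Delta : D -> W, linear_map Delta ->
  (forall m, good m -> Delta (lmul m) = 0) -> Delta d = 0.

Lemma good_catr l1 l2 : good (l1 ++ l2) -> good l2.
Proof.
rewrite /good /alt map_cat => /andP[/altb_catr -> /asboolP /alladm_cat [_ h]].
by apply/asboolP.
Qed.

Section Front.
Variables (Z : algType CC) (S : Z -> Prop) (hS : unit_direct_sum S) (k : bool)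
  (inj : Z -> E) (proj : E -> option Z).
Hypotheses (projK : forall z, proj (inj z) = Some z)
  (projS : forall e z, proj e = Some z -> e = inj z)
  (projN : forall e, proj e = None -> kind e = ~~ k)
  (kinj : forall z, kind (inj z) = k)
  (admI : forall z, adm (inj z) <-> S z).
Variables (iZ : Z -> D) (hZ : alg_hom iZ) (embI : forall z, emb (inj z) = iZ z).

Local Notation pr := (pr hS).
Local Notation rest := (rest hS).

Lemma good_cons_open z m : good m -> (forall e m', m = e :: m' -> proj e = None) -> S z ->
  good (inj z :: m).
Proof.
move=> /andP[ha /asboolP hm] ho hz; rewrite /good /alt map_cons altb_cons.
apply/andP; split; last by apply/asboolP; split => //; exact/admI.
rewrite /alt in ha; rewrite ha /=; case: m ho {ha hm} => [|e m'] ho; first by rewrite kinj; case: k.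
by rewrite /= (projN (ho e m' erefl)) kinj; case: k.
Qed.

Lemma good_cons_own x z m : good (inj x :: m) -> S z -> good (inj z :: m).
Proof.
move=> g hz; have hx : S x.
  by move: g => /andP[_ /asboolP [/admI h _]].
have kc : forall u v, kind (inj u) = kind (inj v) by move=> u v; rewrite !kinj.
by rewrite (@good_slot _ _ inj kc admI [::] m z x).
Qed.

Lemma lmul_cons e m : lmul (e :: m) = emb e * lmul m.
Proof. by rewrite /lmul big_cons. Qed.

Lemma front a m : good m -> Sp (iZ a * lmul m).
Proof.
move=> gm Dl hD hv.
have opn : forall m, good m -> (forall e m', m = e :: m' -> proj e = None) ->
    Dl (iZ a * lmul m) = 0.
  move=> m0 g0 h0.
  rewrite {1}(decE hS a) (ah_add hZ) (ah_scale hZ) (ah_1 hZ) mulrDl -scalerAl mul1r.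
  rewrite (lm_add hD) (lm_scale hD) hv // scaler0 add0r -embI -lmul_cons hv //.
  apply: good_cons_open => //; exact: restS.
case: m gm => [|e m'] gm; first by apply: opn => // e m' h.
case E1: (proj e) => [x|]; last by apply: opn => // e0 m0 [<- _].
have ex := projS E1; subst e.
rewrite lmul_cons embI mulrA -(ah_mul hZ) {1}(decE hS (a * x)).
rewrite (ah_add hZ) (ah_scale hZ) (ah_1 hZ) mulrDl -scalerAl mul1r.
rewrite (lm_add hD) (lm_scale hD) hv; last by apply: (@good_catr [:: inj x]).
rewrite scaler0 add0r -embI -lmul_cons hv //.
apply: good_cons_own gm _; exact: restS.
Qed.
End Front.

Lemma uniqueness (Dl : D -> W) : linear_map Dl ->
  (forall m, good m -> Dl (lmul m) = 0) -> forall d, Dl d = 0.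
Proof.
move=> hD hv d.
pose P (x : D) := forall m, good m -> Sp (x * lmul m).
have : P d.
  apply: (fp_ind hF).
  - by move=> m gm Dl' hD' hv'; rewrite mul1r hv'.
  - move=> c x y hx hy m gm Dl' hD' hv'.
    by rewrite mulrDl -scalerAl (lm_add hD') (lm_scale hD') hx // hy // scaler0 add0r.
  - move=> x y hx hy m gm Dl' hD' hv'.
    pose D2 (e : D) := Dl' (x * e).
    have hD2 : linear_map D2 by move=> c u v; rewrite /D2 mulrDr -scalerAr hD'.
    rewrite -mulrA; apply: (hy m gm D2 hD2) => m0 g0; exact: hx.
  - move=> a m gm; apply: (front hSX projXS projXN kinjX admX) => //; exact: hF.1.
  - move=> b m gm; apply: (front hSY projYS projYN kinjY admY) => //; exact: hF.2.1.
by move=> /(_ [::] good_nil Dl hD hv); rewrite /lmul big_nil mulr1.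
Qed.
End Core.

Section Compl.
Local Open Scope classical_set_scope.
Variables (V : lmodType CC) (U : V -> Prop) (hU : subspace U).

Definition Pg (G : V * V -> Prop) : Prop :=
  [/\ (forall x y y', G (x, y) -> G (x, y') -> y = y'),
      (forall c x y x' y', G (x, y) -> G (x', y') -> G (c *: x + x', c *: y + y')),
      (forall u, U u -> G (u, u)) &
      (forall x y, G (x, y) -> U y)].

Definition G0 (p : V * V) : Prop := U p.1 /\ p.2 = p.1.

Lemma Pg_G0 : Pg G0.
Proof.
split.
- by move=> x y y' [_ /= ->] [_ /= ->].
- move=> c x y x' y' [/= hx ->] [/= hx' ->]; split => //=; exact: hU.2.
- by [].
- by move=> x y [/= hx ->].
Qed.

Definition P' (A : set (V * V)) : Prop := Pg (fun p => A p \/ G0 p).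

Lemma Pg_two (H : V * V -> Prop) :
  (forall p q, H p -> H q -> exists K, Pg K /\ (forall r, K r -> H r) /\ K p /\ K q) ->
  (forall u, U u -> H (u, u)) -> (forall x y, H (x, y) -> U y) -> Pg H.
Proof.
move=> two hc hv; split => //.
- move=> x y y' h1 h2; have [K [[f _ _ _] [_ [k1 k2]]]] := two _ _ h1 h2; exact: f k1 k2.
- move=> c x y x' y' h1 h2; have [K [[_ cl _ _] [KH [k1 k2]]]] := two _ _ h1 h2.
  exact/KH/cl.
Qed.

Lemma chain_ok (F : set (set (V * V))) : F `<=` P' -> total_on F subset ->
  P' (\bigcup_(X in F) X).
Proof.
move=> FP tot; apply: Pg_two.
- move=> p q hp hq.
  have gen : forall X, F X -> exists K, Pg K /\ (forall r, K r -> (\bigcup_(X in F) X) r \/ G0 r) /\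
      (forall r, X r \/ G0 r -> K r).
    move=> X FX; exists (fun r => X r \/ G0 r); split; first exact: FP.
    split => // r [xr|g]; [left; by exists X|by right].
  case: hp => [[X FX Xp]|gp]; case: hq => [[Y FY Yq]|gq].
  + have [XY|YX] := tot _ _ FX FY.
    * have [K [hK [h1 h2]]] := gen _ FY; exists K; split=> //; split=> //.
      by split; apply: h2; left => //; apply: XY.
    * have [K [hK [h1 h2]]] := gen _ FX; exists K; split=> //; split=> //.
      by split; apply: h2; left => //; apply: YX.
  + have [K [hK [h1 h2]]] := gen _ FX; exists K; split=> //; split=> //.
    by split; apply: h2; [left|right].
  + have [K [hK [h1 h2]]] := gen _ FY; exists K; split=> //; split=> //.
    by split; apply: h2; [right|left].
  + exists G0; split; first exact: Pg_G0.
    by split => //; move=> r gr; right.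
- by move=> u hu; right.
- move=> x y [[X FX Xp]|[_ /= ->]] //.
  by have [_ _ _ hv] := FP _ FX; apply: (hv x); left.
Qed.

Lemma retraction : exists r : V -> V, linear_map r /\ (forall v, U (r v)) /\ (forall u, U u -> r u = u).
Proof.
have [A [PA maxA]] := Zorn_bigcup chain_ok.
pose G p := A p \/ G0 p.
have [fG cG uG vG] : Pg G := PA.
have tot : forall v, exists y, G (v, y).
  move=> v; apply: contrapT => nv.
  pose G' (p : V * V) := exists x y c, G (x, y) /\ p = (x + c *: v, y).
  have G0G' : forall p, G0 p -> G' p.
    move=> [x y] g0; exists x, y, 0; split; last by rewrite scale0r addr0.
    by right.
  have GG' : forall p, G p -> G' p.
    by move=> [x y] g; exists x, y, 0; rewrite scale0r addr0.
  have PG' : Pg G'.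
    split.
    - move=> x y y' [x1 [y1 [c1 [g1 [-> ->]]]]] [x2 [y2 [c2 [g2 []]]]] e ->.
      have [ec|nc] := eqVneq c1 c2.
        subst c2; move/addIr: e => e; subst x2; exact: fG g1 g2.
      exfalso; apply: nv; exists ((c1 - c2)^-1 *: (y2 - y1)).
      have : G ((c1 - c2)^-1 *: (x2 - x1), (c1 - c2)^-1 *: (y2 - y1)).
        have := cG (c1 - c2)^-1 (x2 - x1) (y2 - y1) 0 0.
        rewrite !addr0; apply.
          have := cG (-1) x1 y1 x2 y2 g1 g2; rewrite !scaleN1r.
          by rewrite (addrC (- x1)) (addrC (- y1)).
        by apply: uG; exact: hU.1.
      suff -> : (c1 - c2)^-1 *: (x2 - x1) = v by [].
      have -> : x2 - x1 = (c1 - c2) *: v.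
        have h : x2 = x1 + (c1 *: v - c2 *: v) by rewrite addrA e addrK.
        by rewrite h scalerBl addrC addKr.
      by rewrite scalerA mulVf ?scale1r // subr_eq0.
    - move=> c x y x' y' [x1 [y1 [c1 [g1 [-> ->]]]]] [x2 [y2 [c2 [g2 [-> ->]]]]].
      exists (c *: x1 + x2), (c *: y1 + y2), (c * c1 + c2); split; first exact: cG.
      congr (_, _); rewrite scalerDr scalerDl scalerA addrACA //.
    - by move=> u hu; apply: G0G'.
    - by move=> x y [x1 [y1 [c1 [g1 [_ ->]]]]]; exact: vG g1.
  apply: (maxA (fun p => G' p)).
    split; first by move=> p ap; apply: GG'; left.
    move=> sub; apply: nv; exists 0.
    have : G' (v, 0).
      exists 0, 0, 1; split; first by apply: uG; exact: hU.1.
      by rewrite add0r scale1r.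
    by move/sub => h; left.
  rewrite /P'; have -> : (fun p => G' p \/ G0 p) = G'.
    by apply: funext => p; apply: propext; split => [[]|]; [|apply: G0G'|left].
  exact: PG'.
pose r v := projT1 (cid (tot v)).
have rP v : G (v, r v) := projT2 (cid (tot v)).
exists r; split; last split.
- move=> c x y; apply: fG (rP _) _; exact: cG.
- by move=> v; apply: vG (rP v).
- by move=> u hu; apply: fG (rP u) (uG u hu).
Qed.
End Compl.

Lemma idx_enum n : index_enum 'I_n = enum 'I_n.
Proof. by rewrite enumT. Qed.

Lemma altb_nth (bs : seq bool) : altb bs -> forall i, (i < size bs)%N -> nth false bs i = xorb (nth false bs 0) (odd i).
Proof.
elim: bs => [|b bs IH] // + i; rewrite altb_cons => /andP[ha hh].
case: i => [|i] /=; first by move: hh; case: b.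
rewrite ltnS => hi; rewrite IH //.
case: bs hh ha IH hi => [|c t] //= hh _ _ _.
by move: hh; case: b; case: c => //= _; case: (odd i).
Qed.

Lemma nth_altb (bs : seq bool) : (forall i, (i < size bs)%N -> nth false bs i = xorb (nth false bs 0) (odd i)) -> altb bs.
Proof.
elim: bs => [|b bs IH] // h; rewrite altb_cons; apply/andP; split.
  apply: IH => i hi; have h1 := h i.+1 hi; have h0 := h 1%N.
  case: bs h h1 h0 hi => [|c t] //= h h1 h0 hi.
  have {}h0 := h0 erefl; rewrite h1 h0 /=.
  by clear h; case: b {h1} h0; case: c; case: (odd i).
case: bs h {IH} => [|c t] h; first by clear h; case: b.
by have := h 1%N erefl; clear h; rewrite /=; case: b; case: c.
Qed.

Section Conv.
Variables (A As : algType CC) (phi : A -> As) (S : A -> Prop).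
Local Notation SY := (image_sub phi S).
Local Notation E := (E A As).
Local Notation kind := (@kind A As).

Definition of_letter (b : bool) : letter A As b -> E :=
  match b as b0 return letter A As b0 -> E with
  | true => fun y => inr y
  | false => fun x => inl x
  end.
Definition proj_letter (b : bool) (e : E) : letter A As b :=
  match b as b0 return letter A As b0 with
  | true => match e with inr y => y | inl _ => 0 end
  | false => match e with inl x => x | inr _ => 0 end
  end.

Definition toword (s : bool) (n : nat) (l : seq E) : word A As s n :=
  fun i => proj_letter (xorb s (odd i)) (nth (inl 0) l i).
Arguments toword : clear implicits.
Definition ofword (s : bool) (n : nat) (x : word A As s n) : seq E :=
  [seq of_letter (x i) | i <- enum 'I_n.+1].

Lemma of_letterK b (y : letter A As b) : proj_letter b (of_letter y) = y. Proof. by case: b y. Qed.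
Lemma kind_of b (y : letter A As b) : kind (of_letter y) = b. Proof. by case: b y. Qed.
Lemma proj_letterK b e : kind e = b -> of_letter (proj_letter b e) = e.
Proof. by case: b; case: e. Qed.
Lemma adm_of b (y : letter A As b) : adm S SY (of_letter y) <-> letter_sub phi S y.
Proof. by case: b y. Qed.

Variables (D : algType CC) (iA : A -> D) (iAs : As -> D).
Lemma emb_of b (y : letter A As b) : emb iA iAs (of_letter y) = letter_emb iA iAs y.
Proof. by case: b y. Qed.

Lemma size_ofword s n (x : word A As s n) : size (ofword x) = n.+1.
Proof. by rewrite size_map size_enum_ord. Qed.

Lemma nth_ofword s n (x : word A As s n) (i : 'I_n.+1) : nth (inl 0) (ofword x) i = of_letter (x i).
Proof.
rewrite /ofword (nth_map i); last by rewrite size_enum_ord.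
by rewrite nth_ord_enum.
Qed.

Lemma toword_ofword s n (x : word A As s n) : toword s n (ofword x) = x.
Proof.
apply: functional_extensionality_dep => i.
by rewrite /toword nth_ofword of_letterK.
Qed.

Lemma lmul_ofword s n (x : word A As s n) : lmul iA iAs (ofword x) = word_mul iA iAs x.
Proof.
rewrite /lmul /word_mul big_map -idx_enum.
by apply: eq_bigr => i _; rewrite emb_of.
Qed.

Lemma map_kind_ofword s n (x : word A As s n) i : (i < n.+1)%N ->
  nth false (map kind (ofword x)) i = xorb s (odd i).
Proof.
move=> hi; rewrite (nth_map (inl 0)) ?size_ofword //.
by rewrite (nth_ofword x (Ordinal hi)) kind_of.
Qed.

Lemma good_ofword s n (x : word A As s n) : admissible phi S x -> good S SY (ofword x).
Proof.
move=> hx; apply/andP; split.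
  apply: nth_altb => i; rewrite size_map size_ofword => hi.
  by rewrite !map_kind_ofword //=; clear hx; move: x; case: s.
apply/asboolP.
have : forall i : 'I_n.+1, adm S SY (nth (inl 0) (ofword x) i).
  by move=> i; rewrite nth_ofword; apply/adm_of.
rewrite -(size_ofword x); elim: (ofword x) => [|e l IH] //= h.
split; first exact: (h (Ordinal (ltn0Sn _))).
apply: IH => i; exact: (h (@Ordinal (size l).+1 i.+1 (ltn_ord i))).
Qed.

Lemma good_kind (l : seq E) : good S SY l -> forall i, (i < size l)%N ->
  kind (nth (inl 0) l i) = xorb (kind (nth (inl 0) l 0)) (odd i).
Proof.
move=> /andP[ha _] i hi; have := altb_nth ha; rewrite size_map => /(_ i hi).
by rewrite !(nth_map (inl 0)) // (leq_ltn_trans (leq0n _) hi).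
Qed.

Lemma good_adm (l : seq E) : good S SY l -> forall i, (i < size l)%N -> adm S SY (nth (inl 0) l i).
Proof.
move=> /andP[_ /asboolP]; elim: l => [|e l IH] //= [he hl] [|i] //= hi.
exact: IH.
Qed.

Lemma ofword_toword (e : E) (t : seq E) : good S SY (e :: t) ->
  ofword (toword (kind e) (size t) (e :: t)) = e :: t.
Proof.
move=> g; apply: (@eq_from_nth _ (inl 0)); first by rewrite size_ofword.
move=> i; rewrite size_ofword => hi.
rewrite (nth_ofword _ (Ordinal hi)) /toword /= proj_letterK //.
by rewrite (good_kind g) //.
Qed.

Lemma sub_proj b (e : E) : kind e = b -> adm S SY e -> letter_sub phi S (proj_letter b e).
Proof. by case: b; case: e. Qed.

Lemma admissible_toword (e : E) (t : seq E) : good S SY (e :: t) ->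
  admissible phi S (toword (kind e) (size t) (e :: t)).
Proof.
move=> g i; rewrite /toword.
have hi : (i < size (e :: t))%N by exact: ltn_ord.
apply: sub_proj; [exact: (good_kind g hi)|exact: good_adm].
Qed.

Lemma toword_slot s n (l1 l2 : seq E) (e e' : E) (hi : (size l1 < n.+1)%N) :
  toword s n (l1 ++ e :: l2) =
  @dfwith 'I_n.+1 (fun j => letter A As (xorb s (odd j))) (toword s n (l1 ++ e' :: l2)) (Ordinal hi) (proj_letter _ e).
Proof.
apply: functional_extensionality_dep => j; case: dfwithP => [|j0 nij].
  by rewrite /toword /= nth_cat ltnn subnn.
rewrite /toword; congr proj_letter; rewrite !nth_cat.
case: ltnP => // hj; case E1: (j0 - size l1)%N => [|m] //.
exfalso; move: nij; rewrite -val_eqE /=; apply/negP/negPn; apply/eqP.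
by apply/anti_leq; rewrite hj /= -subn_eq0 E1.
Qed.

Lemma proj_letter_inl b c (y z : A) :
  proj_letter b (inl (c *: y + z)) = c *: proj_letter b (inl y) + proj_letter b (inl z).
Proof. by case: b => //=; rewrite scaler0 addr0. Qed.
Lemma proj_letter_inr b c (y z : As) :
  proj_letter b (inr (c *: y + z)) = c *: proj_letter b (inr y) + proj_letter b (inr z).
Proof. by case: b => //=; rewrite scaler0 addr0. Qed.

Unset Implicit Arguments.
Variables (W : lmodType CC) (w0 : W) (beta : forall s n, word A As s n -> W).
Set Implicit Arguments.
Hypothesis hb : forall s n, multilinear_word phi S (beta s n).

Definition gam (l : seq E) : W :=
  match l with [::] => w0 | e :: t => beta (kind e) (size t) (toword (kind e) (size t) l) end.
Definition F0f (l : seq E) : W := if good S SY l then gam l else 0.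

Lemma gam_ofword s n (x : word A As s n) : gam (ofword x) = beta s n x.
Proof.
case E1: (ofword x) => [|e t].
  by have := size_ofword x; rewrite E1.
have ks : kind e = s.
  have := map_kind_ofword x (ltn0Sn n); rewrite E1 /=; by case: s x E1.
have st : size t = n.
  by have := size_ofword x; rewrite E1 /= => -[].
subst s n; by rewrite /= -E1 toword_ofword.
Qed.

Lemma F0_slot (Z : algType CC) (Sz : Z -> Prop) (inj : Z -> E)
  (kc : forall u v, kind (inj u) = kind (inj v)) (ad : forall v, adm S SY (inj v) <-> Sz v)
  (pl : forall b c y z, proj_letter b (inj (c *: y + z)) = c *: proj_letter b (inj y) + proj_letter b (inj z))
  (sub : subspace Sz) :
  MLk Sz inj F0f.
Proof.
move=> l1 l2 c y z hy hz.
have hw : Sz (c *: y + z) by exact: sub.2.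
have g1 := good_slot kc ad l1 l2 hw hy.
have g2 := good_slot kc ad l1 l2 hz hy.
rewrite /F0f g1 g2; case G: (good S SY (l1 ++ inj y :: l2)); last by rewrite scaler0 addr0.
have gen : forall v, gam (l1 ++ inj v :: l2) =
   beta (kind (nth (inl 0) (l1 ++ inj y :: l2) 0)) (size l1 + size l2)
     (toword _ _ (l1 ++ inj v :: l2)).
  move=> v; case: l1 {g1 g2 G} => [|e l1] /=.
    by rewrite (kc v y).
  by rewrite size_cat /= addnS.
have hadm : admissible phi S (toword (kind (nth (inl 0) (l1 ++ inj y :: l2) 0)) (size l1 + size l2) (l1 ++ inj y :: l2)).
  move: G; case: l1 {g1 g2 gen} => [|e l1] G /=.
    exact: (admissible_toword G).
  have -> : ((size l1).+1 + size l2)%N = size (l1 ++ inj y :: l2) by rewrite size_cat /= addnS addSn.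
  exact: (admissible_toword G).
rewrite !gen.
set s := kind _ in hadm *; set n := (size l1 + size l2)%N in hadm *.
have hi : (size l1 < n.+1)%N by rewrite ltnS leq_addr.
have kb : kind (inj y) = xorb s (odd (size l1)).
  have := good_kind G (i := size l1); rewrite nth_cat ltnn subnn /= => ->//.
  by rewrite size_cat /= addnS ltnS leq_addr.
have lsub : forall v, Sz v -> letter_sub phi S (proj_letter (xorb s (odd (Ordinal hi))) (inj v)).
  move=> v hv; apply: sub_proj; last exact/ad.
  by rewrite /= (kc v y).
rewrite (@toword_slot s n l1 l2 (inj (c *: y + z)) (inj y) hi).
rewrite (@toword_slot s n l1 l2 (inj z) (inj y) hi) pl (hb hadm); try exact: lsub.
congr (_ *: _ + _); congr beta.
apply: functional_extensionality_dep => j; case: dfwithP => [|j0 nij] //.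
by rewrite /toword /= nth_cat ltnn subnn.
Qed.

Lemma F0_ML (hSY : subspace SY) (hSA : subspace S) : ML S SY F0f.
Proof.
split.
- by apply: F0_slot => //; [exact: proj_letter_inl].
- by apply: F0_slot => //; [exact: proj_letter_inr].
- by move=> l /negbTE hl; rewrite /F0f hl.
Qed.
End Conv.

Lemma image_uds (A As : algType CC) (phi : A -> As) (S : A -> Prop) :
  anti_iso phi -> unit_direct_sum S -> unit_direct_sum (image_sub phi S).
Proof.
move=> hp hS; have ha := phi_anti hp.
split; [split|split].
- by exists 0; split; [exact: (S0 hS)|exact: (an_0 ha)].
- move=> c _ _ [x [hx <-]] [y [hy <-]]; exists (c^* *: x + y); split.
    exact: SD.
  by rewrite ha.1 conjCK.
- move=> b; have [c [a0 [ha0 e]]] := hS.2.1 (ainv hp b).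
  exists c^*, (phi a0); split; first by exists a0.
  by rewrite -[b](ainvKV hp) e ha.1 (phi1 hp).
- move=> c _ [a0 [ha0 <-]] e.
  have : phi (c^* *: 1 + a0) = 0 by rewrite ha.1 conjCK (phi1 hp).
  move=> /(congr1 (ainv hp)); rewrite ainvK.
  have -> : ainv hp 0 = 0 by exact: (an_0 (ainv_anti hp)).
  move=> /(hS.2.2 _ _ ha0) [/eqP c0 ->]; split; last exact: (an_0 ha).
  by move: c0; rewrite conjC_eq0 => /eqP.
Qed.

Lemma atd (A As : algType CC) (phi : A -> As) (S : A -> Prop)
  (D : algType CC) (iA : A -> D) (iAs : As -> D) :
  anti_iso phi -> unit_direct_sum S -> is_free_product iA iAs ->
  alternating_tensor_decomposition phi S iA iAs.
Proof.
move=> hp hS hF W w0 beta hb.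
have hSY := image_uds hp hS.
have [hW|hW] := pselect (exists w : W, w != 0); last first.
  have z : forall w : W, w = 0.
    by move=> w; apply: contrapT => nw; apply: hW; exists w; apply/eqP.
  exists (fun _ => 0); split.
    split; first by move=> c x y; rewrite scaler0 addr0.
    by split; [exact: esym (z w0)|move=> *; exact: esym (z _)].
  by move=> L' _ _ _ d; exact: z.
pose F0 : fam S (image_sub phi S) W := Fam (@F0_ML _ _ phi S W w0 beta hb hSY.1 hS.1).
have [L [hL hLm]] := existence hS hSY hF hW F0.
have L1 : L 1 = w0.
  have := hLm [::] (good_nil _ _); rewrite /lmul big_nil => ->.
  by rewrite /= /F0f good_nil.
have Lw : forall s n (x : word A As s n), admissible phi S x -> L (word_mul iA iAs x) = beta s n x.
  move=> s n x hx; rewrite -lmul_ofword hLm; last exact: good_ofword.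
  by rewrite /= /F0f good_ofword // gam_ofword.
exists L; split; first by split.
move=> L' hL' L'1 L'w d; apply/eqP; rewrite -subr_eq0; apply/eqP.
pose Dl x := L' x - L x.
have hDl : linear_map Dl.
  by move=> c x y; rewrite /Dl hL hL' scalerBr addrACA opprD.
apply: (uniqueness hS hSY hF hDl) => -[|e t] g.
  by rewrite /Dl /lmul big_nil L1 L'1 subrr.
rewrite /Dl -(ofword_toword g) lmul_ofword L'w ?Lw ?subrr //; exact: admissible_toword.
Qed.

Lemma star_gen (A1 A2 D1 D2 : algType CC) (i1 : A1 -> D1) (i2 : A2 -> D1)
  (hF : is_free_product i1 i2) (s1 : D1 -> D1) (s2 : D2 -> D2)
  (hs1 : star_involution s1) (hs2 : star_involution s2) (h : D1 -> D2) (hh : alg_hom h) :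
  (forall a, h (s1 (i1 a)) = s2 (h (i1 a))) -> (forall b, h (s1 (i2 b)) = s2 (h (i2 b))) ->
  forall x, h (s1 x) = s2 (h x).
Proof.
move=> e1 e2.
have hg : alg_hom (s2 \o (h \o s1)).
  apply: anti_anti; first exact: anti_hom_l (star_anti hs1) hh.
    exact: star_anti hs2.
  by rewrite /= (star1 hs1) (ah_1 hh) (star1 hs2).
have g1 : forall a, (s2 \o (h \o s1)) (i1 a) = h (i1 a) by move=> a /=; rewrite e1 (starK hs2).
have g2 : forall b, (s2 \o (h \o s1)) (i2 b) = h (i2 b) by move=> b /=; rewrite e2 (starK hs2).
have H := fp_unique hF hg hh g1 g2.
by move=> x; have := H (s1 x); rewrite /= (starK hs1) => <-.
Qed.

Lemma kernel_uds (Z : algType CC) (p : Z -> Z) : linear_map p -> p 1 = 1 ->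
  (forall z, exists c, p z = c *: 1) -> unit_direct_sum (fun z => p z = 0).
Proof.
move=> hp p1 hv; have p0 := lm_0 hp.
split; [split|split].
- exact: p0.
- by move=> c x y hx hy; rewrite hp hx hy scaler0 addr0.
- move=> z; have [c hc] := hv z; exists c, (z - c *: 1); split.
    by rewrite (lm_add hp) -scaleN1r (lm_scale hp) scaleN1r (lm_scale hp) p1 hc subrr.
  by rewrite addrC subrK.
- move=> c a0 ha0 e.
  have : p (c *: 1 + a0) = 0 by rewrite e.
  rewrite hp p1 ha0 addr0 => /eqP; rewrite scaler_eq0 oner_eq0 orbF => /eqP c0.
  by split => //; move: e; rewrite c0 scale0r add0r.
Qed.

Section Part1.
Variables (A As : algType CC) (phiA : A -> As) (hphiA : anti_iso phiA)
  (DA : algType CC) (iA : A -> DA) (iAs : As -> DA) (sA : DA -> DA)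
  (hDA : is_star_double phiA iA iAs sA).
Variables (B Bs : algType CC) (phiB : B -> Bs) (hphiB : anti_iso phiB)
  (DB : algType CC) (iB : B -> DB) (iBs : Bs -> DB) (sB : DB -> DB)
  (hDB : is_star_double phiB iB iBs sB).
Variables (rho : A -> B) (hrho : alg_hom rho).

Lemma p1_exists : exists h : DA -> DB, alg_hom h /\
        (forall a, h (iA a) = iB (rho a)) /\
        (forall a, h (iAs (phiA a)) = iBs (phiB (rho a))).
Proof.
have h1 : alg_hom (iB \o rho) by apply: alg_hom_comp => //; exact: hDB.1.1.
have h2 : alg_hom (iBs \o (phiB \o (rho \o ainv hphiA))).
  apply: alg_hom_comp; last exact: hDB.1.2.1.
  apply: anti_anti; first exact: anti_hom_l (ainv_anti hphiA) hrho.
    exact: phi_anti.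
  by rewrite /= (ainv1 hphiA) (ah_1 hrho) (phi1 hphiB).
have [h [hh [e1 e2]]] := fp_hom hDA.1 h1 h2.
exists h; split=> //; split=> // a; by rewrite e2 /= ainvK.
Qed.

Lemma p1_star (h : DA -> DB) : alg_hom h ->
  (forall a, h (iA a) = iB (rho a)) ->
  (forall a, h (iAs (phiA a)) = iBs (phiB (rho a))) -> star_hom sA sB h.
Proof.
move=> hh e1 e2; split => //.
apply: (star_gen hDA.1 hDA.2.1 hDB.2.1) => // [a|b].
  by rewrite hDA.2.2.1 e2 e1 hDB.2.2.1.
rewrite -[b](ainvKV hphiA) hDA.2.2.2 e2 e1.
by rewrite hDB.2.2.2.
Qed.

Hypothesis rho_inj : injective rho.

Lemma lmul_slot (X Y D : algType CC) (iX : X -> D) (iY : Y -> D) l1 e l2 :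
  lmul iX iY (l1 ++ e :: l2) = lmul iX iY l1 * emb iX iY e * lmul iX iY l2.
Proof. by rewrite /lmul big_cat big_cons /= mulrA. Qed.
Lemma p1_inj (h : DA -> DB) : alg_hom h ->
  (forall a, h (iA a) = iB (rho a)) ->
  (forall a, h (iAs (phiA a)) = iBs (phiB (rho a))) -> injective h.
Proof.
move=> hh e1 e2.
pose UA (a : A) := exists c : CC, a = c *: 1.
have hUA : subspace UA.
  split; first by exists 0; rewrite scale0r.
  by move=> c _ _ [d ->] [d' ->]; exists (c * d + d'); rewrite scalerDl scalerA.
have [rA [hrA [rAU rAid]]] := retraction hUA.
have rA1 : rA 1 = 1 by apply: rAid; exists 1; rewrite scale1r.
have hSA : unit_direct_sum (fun a => rA a = 0).
  apply: kernel_uds => // z; have [c ->] := rAU z; by exists c.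
pose UB (b : B) := exists a, b = rho a.
have hUB : subspace UB.
  split; first by exists 0; rewrite (ah_0 hrho).
  by move=> c _ _ [a ->] [a' ->]; exists (c *: a + a'); rewrite hrho.1.
have [rB [hrB [rBU rBid]]] := retraction hUB.
pose sig (b : B) := sval (cid (rBU b)).
have sigP b : rB b = rho (sig b) := svalP (cid (rBU b)).
have sig_rho a : sig (rho a) = a.
  by apply: rho_inj; rewrite -sigP rBid //; exists a.
have hsig : linear_map sig.
  by move=> c x y; apply: rho_inj; rewrite -sigP hrB hrho.1 !sigP.
have sig1 : sig 1 = 1 by rewrite -(ah_1 hrho) sig_rho.
pose pB (b : B) := rho (rA (sig b)).
have hpB : linear_map pB by move=> c x y; rewrite /pB hsig hrA hrho.1.
have hSB : unit_direct_sum (fun b => pB b = 0).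
  apply: kernel_uds => //; first by rewrite /pB sig1 rA1 (ah_1 hrho).
  move=> z; have [c hc] := rAU (sig z); exists c; by rewrite /pB hc (ah_scale hrho) (ah_1 hrho).
pose SB := fun b => pB b = 0.
pose SA := fun a => rA a = 0.
have hSYB := image_uds hphiB hSB.
have hSYA := image_uds hphiA hSA.
(* the left inverse *)
pose back (e : E B Bs) : E A As :=
  match e with inl b => inl (sig b) | inr b' => inr (phiA (sig (ainv hphiB b'))) end.
pose F0f (l : seq (E B Bs)) : DA := if good SB (image_sub phiB SB) l then lmul iA iAs (map back l) else 0.
have hML : ML SB (image_sub phiB SB) F0f.
  split.
  - move=> l1 l2 c y z hy hz.
    have kc : forall u v : B, kind (@inl B Bs u) = kind (@inl B Bs v) by [].
    have ad : forall v : B, adm SB (image_sub phiB SB) (inl v) <-> SB v by [].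
    have hw : SB (c *: y + z) by exact: hSB.1.2.
    rewrite /F0f (good_slot kc ad l1 l2 hw hy) (good_slot kc ad l1 l2 hz hy).
    case: ifP => _; last by rewrite scaler0 addr0.
    rewrite !map_cat /= !lmul_slot /= hsig hDA.1.1.1.
    by rewrite mulrDr mulrDl -!scalerAr -!scalerAl.
  - move=> l1 l2 c y z hy hz.
    have kc : forall u v : Bs, kind (@inr B Bs u) = kind (@inr B Bs v) by [].
    have ad : forall v : Bs, adm SB (image_sub phiB SB) (inr v) <-> image_sub phiB SB v by [].
    have hw : image_sub phiB SB (c *: y + z) by exact: hSYB.1.2.
    rewrite /F0f (good_slot kc ad l1 l2 hw hy) (good_slot kc ad l1 l2 hz hy).
    case: ifP => _; last by rewrite scaler0 addr0.
    rewrite !map_cat /= !lmul_slot /=.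
    rewrite (ainv_anti hphiB).1 hsig (phi_anti hphiA).1 conjCK hDA.1.2.1.1.
    by rewrite mulrDr mulrDl -!scalerAr -!scalerAl.
  - by move=> l /negbTE hl; rewrite /F0f hl.
have nz : exists w : DA, w != 0 by exists 1; exact: oner_neq0.
have [L [hL hLm]] := existence hSB hSYB hDB.1 nz (Fam hML).
pose fwd (e : E A As) : E B Bs :=
  match e with inl a => inl (rho a) | inr a' => inr (phiB (rho (ainv hphiA a'))) end.
have hfwd : forall m, lmul iB iBs (map fwd m) = h (lmul iA iAs m).
  move=> m; rewrite /lmul (ah_prod hh) big_map; apply: eq_bigr => -[a|a'] _ /=.
    by rewrite e1.
  by rewrite -{2}[a'](ainvKV hphiA) e2.
have gfwd : forall m, good SA (image_sub phiA SA) m -> good SB (image_sub phiB SB) (map fwd m).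
  move=> m /andP[ha /asboolP hm]; apply/andP; split.
    by move: ha; rewrite /alt -map_comp; congr altb; apply: eq_map => -[].
  apply/asboolP; elim: m hm {ha} => [|e m IH] //= [he hm]; split; last exact: IH.
  case: e he => [a|a'] /= he.
    by rewrite /SB /pB sig_rho he (ah_0 hrho).
  case: he => a0 [ha0 <-]; exists (rho a0); split; last by rewrite ainvK.
  by rewrite /SB /pB sig_rho ha0 (ah_0 hrho).
have bf : forall m, map back (map fwd m) = m.
  move=> m; rewrite -map_comp -[RHS]map_id; apply: eq_map => -[a|a'] /=.
    by rewrite sig_rho.
  by rewrite ainvK sig_rho ainvKV.
pose Dl (d : DA) := L (h d) - d.
have hDl : linear_map Dl.
  by move=> c x y; rewrite /Dl hh.1 hL scalerBr addrACA opprD.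
have Z := uniqueness hSA hSYA hDA.1 hDl.
have Lh : forall d, L (h d) = d.
  move=> d; apply/eqP; rewrite -subr_eq0; apply/eqP; apply: Z => m gm.
  by rewrite /Dl -hfwd hLm ?gfwd // /= /F0f gfwd // bf subrr.
by move=> x y hxy; rewrite -(Lh x) hxy Lh.
Qed.
End Part1.

Lemma hom_after_two_anti (A B C : algType CC) (f : A -> B) (g : B -> C) (hf : anti_iso f) (hg : anti_iso g) :
  alg_hom (g \o f).
Proof.
apply: anti_anti; [exact: phi_anti hf|exact: phi_anti hg|].
by rewrite /= (phi1 hf) (phi1 hg).
Qed.

Lemma hom_inv_two_anti (A B C : algType CC) (f : A -> B) (g : B -> C) (hf : anti_iso f) (hg : anti_iso g) :
  alg_hom (ainv hf \o ainv hg).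
Proof.
apply: anti_anti; [exact: ainv_anti hg|exact: ainv_anti hf|].
by rewrite /= (ainv1 hg) (ainv1 hf).
Qed.

Lemma part4 (A As : algType CC) (phiA : A -> As) (hphiA : anti_iso phiA)
  (DA : algType CC) (iA : A -> DA) (iAs : As -> DA) (sA : DA -> DA)
  (hDA : is_star_double phiA iA iAs sA)
  (Ass : algType CC) (psi : As -> Ass) (hpsi : anti_iso psi)
  (DAs : algType CC) (jAs : As -> DAs) (jAss : Ass -> DAs) (sAs : DAs -> DAs)
  (hDAs : is_star_double psi jAs jAss sAs) :
  exists f : DA -> DAs, star_iso sA sAs f.
Proof.
have h1 : alg_hom (jAss \o (psi \o phiA)).
  apply: alg_hom_comp; [exact: hom_after_two_anti|exact: hDAs.1.2.1].
have [f [hf [ef1 ef2]]] := fp_hom hDA.1 h1 hDAs.1.1.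
have h2 : alg_hom (iA \o (ainv hphiA \o ainv hpsi)).
  apply: alg_hom_comp; [exact: hom_inv_two_anti|exact: hDA.1.1].
have [g [hg [eg1 eg2]]] := fp_hom hDAs.1 hDA.1.2.1 h2.
exists f; split; first split => //.
  apply: (star_gen hDA.1 hDA.2.1 hDAs.2.1) => // [a|b].
    by rewrite hDA.2.2.1 ef2 ef1 /= hDAs.2.2.2.
  rewrite -[b](ainvKV hphiA) hDA.2.2.2 ef1 ef2 /=.
  by rewrite hDAs.2.2.1.
apply: (Bijective (g := g)).
- move=> x; have := fp_unique hDA.1 (alg_hom_comp hf hg) (alg_hom_id _).
  apply => [a|b] /=; first by rewrite ef1 /= eg2 /= ainvK ainvK.
  by rewrite ef2 eg1.
- move=> x; have := fp_unique hDAs.1 (alg_hom_comp hg hf) (alg_hom_id _).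
  apply => [a|b] /=; first by rewrite eg1 ef2.
  by rewrite eg2 /= ef1 /= ainvKV ainvKV.
Qed.

Lemma part5 (A As : algType CC) (phiA : A -> As) (hphiA : anti_iso phiA)
  (DA : algType CC) (iA : A -> DA) (iAs : As -> DA) (sA : DA -> DA)
  (hDA : is_star_double phiA iA iAs sA)
  (Ass : algType CC) (psi : As -> Ass) (hpsi : anti_iso psi)
  (DAs : algType CC) (jAs : As -> DAs) (jAss : Ass -> DAs) (sAs : DAs -> DAs)
  (hDAs : is_star_double psi jAs jAss sAs)
  (DAst : algType CC) (chi : DA -> DAst) (hchi : anti_iso chi)
  (DDA : algType CC) (k1 : DA -> DDA) (k2 : DAst -> DDA) (sDD : DDA -> DDA)
  (hDDA : is_star_double chi k1 k2 sDD)
  (P : algType CC) (sP : P -> P) (p1 : DA -> P) (p2 : DAs -> P)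
  (hP : is_star_free_product sA sAs sP p1 p2) :
  exists f : DDA -> P, star_iso sDD sP f.
Proof.
have [hsP [[hp1 sp1] [[hp2 sp2] univ]]] := hP.
have [f1 [hf1 [ef1a ef1b]]] := fp_hom hDA.1 (alg_hom_comp hDA.1.1 hp1) (alg_hom_comp hDAs.1.1 hp2).
have hf2 : alg_hom (sP \o (f1 \o ainv hchi)).
  apply: anti_anti; [exact: anti_hom_l (ainv_anti hchi) hf1|exact: star_anti hsP|].
  by rewrite /= (ainv1 hchi) (ah_1 hf1) (star1 hsP).
have [f [hf [efk1 efk2]]] := fp_hom hDDA.1 hf1 hf2.
have hk1iA : alg_hom (k1 \o iA) := alg_hom_comp hDA.1.1 hDDA.1.1.
have hk1iAs : alg_hom (k1 \o iAs) := alg_hom_comp hDA.1.2.1 hDDA.1.1.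
have hg1b : alg_hom (sDD \o ((k1 \o iA) \o ainv hphiA)).
  apply: anti_anti; [exact: anti_hom_l (ainv_anti hphiA) hk1iA|exact: star_anti hDDA.2.1|].
  by rewrite /= (ainv1 hphiA) (ah_1 hDA.1.1) (ah_1 hDDA.1.1) (star1 hDDA.2.1).
have [g1 [hg1 [eg1a eg1b]]] := fp_hom hDA.1 hk1iA hg1b.
have hg2b : alg_hom (sDD \o ((k1 \o iAs) \o ainv hpsi)).
  apply: anti_anti; [exact: anti_hom_l (ainv_anti hpsi) hk1iAs|exact: star_anti hDDA.2.1|].
  by rewrite /= (ainv1 hpsi) (ah_1 hDA.1.2.1) (ah_1 hDDA.1.1) (star1 hDDA.2.1).
have [g2 [hg2 [eg2a eg2b]]] := fp_hom hDAs.1 hk1iAs hg2b.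
have sg1 : star_hom sA sDD g1.
  split => //; apply: (star_gen hDA.1 hDA.2.1 hDDA.2.1) => // [a|b].
    by rewrite hDA.2.2.1 eg1b eg1a /= ainvK.
  rewrite -[b](ainvKV hphiA) hDA.2.2.2 eg1a eg1b /= ainvK.
  by rewrite (starK hDDA.2.1).
have sg2 : star_hom sAs sDD g2.
  split => //; apply: (star_gen hDAs.1 hDAs.2.1 hDDA.2.1) => // [a|b].
    by rewrite hDAs.2.2.1 eg2b eg2a /= ainvK.
  rewrite -[b](ainvKV hpsi) hDAs.2.2.2 eg2a eg2b /= ainvK.
  by rewrite (starK hDDA.2.1).
have [g [[sg [eg1 eg2]] _]] := univ DDA sDD g1 g2 hDDA.2.1 sg1 sg2.
have sf : star_hom sDD sP f.
  split => //; apply: (star_gen hDDA.1 hDDA.2.1 hsP) => // [d|e].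
    by rewrite hDDA.2.2.1 efk2 efk1 /= ainvK.
  rewrite -[e](ainvKV hchi) hDDA.2.2.2 efk1 efk2 /= ainvK.
  by rewrite (starK hsP).
exists f; split => //.
have gf1 : forall d, g (f1 d) = k1 d.
  apply: (fp_unique hDA.1 (alg_hom_comp hf1 sg.1) hDDA.1.1) => [a|b] /=.
    by rewrite ef1a eg1 eg1a.
  by rewrite ef1b eg2 eg2a.
have fg1 : forall d, f (g1 d) = p1 d.
  apply: (fp_unique hDA.1 (alg_hom_comp hg1 hf) hp1) => [a|b] /=.
    by rewrite eg1a efk1 ef1a.
  rewrite eg1b /= sf.2 efk1 ef1a -sp1.
  by rewrite hDA.2.2.1 ainvKV.
have fg2 : forall d, f (g2 d) = p2 d.
  apply: (fp_unique hDAs.1 (alg_hom_comp hg2 hf) hp2) => [a|b] /=.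
    by rewrite eg2a efk1 ef1b.
  rewrite eg2b /= sf.2 efk1 ef1b -sp2.
  by rewrite hDAs.2.2.1 ainvKV.
apply: (Bijective (g := g)).
- apply: (fp_unique hDDA.1 (alg_hom_comp hf sg.1) (alg_hom_id _)) => [d|e] /=.
    by rewrite efk1 gf1.
  by rewrite efk2 /= sg.2 gf1 hDDA.2.2.1 ainvKV.
- have sfg : star_hom sP sP (f \o g).
    split; first exact: alg_hom_comp sg.1 hf.
    by move=> x /=; rewrite sg.2 sf.2.
  have sid : star_hom sP sP id by [].
  have [h0 [_ hu]] := univ P sP p1 p2 hsP (conj hp1 sp1) (conj hp2 sp2).
  move=> x.
  have e1 : (f \o g) x = h0 x.
    apply: hu => // [a|b] /=; by rewrite ?eg1 ?fg1 ?eg2 ?fg2.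
  have e2 : id x = h0 x by apply: hu.
  by rewrite /= in e1; rewrite e1 -e2.
Qed.


Theorem proposition1
  (A As : algType CC) (phiA : A -> As) (hphiA : anti_iso phiA)
  (DA : algType CC) (iA : A -> DA) (iAs : As -> DA) (sA : DA -> DA)
  (hDA : is_star_double phiA iA iAs sA) :
  (* (1) *)
  (forall (B Bs : algType CC) (phiB : B -> Bs), anti_iso phiB ->
   forall (DB : algType CC) (iB : B -> DB) (iBs : Bs -> DB) (sB : DB -> DB),
   is_star_double phiB iB iBs sB ->
   forall rho : A -> B, alg_hom rho ->
     (exists h : DA -> DB, alg_hom h /\
        (forall a, h (iA a) = iB (rho a)) /\
        (forall a, h (iAs (phiA a)) = iBs (phiB (rho a)))) /\
     (forall h : DA -> DB, alg_hom h ->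
        (forall a, h (iA a) = iB (rho a)) ->
        (forall a, h (iAs (phiA a)) = iBs (phiB (rho a))) ->
        star_hom sA sB h /\ (injective rho -> injective h))) /\
  (* (2) *)
  (forall (Cc Cs : algType CC) (phiC : Cc -> Cs), anti_iso phiC ->
   forall (DC : algType CC) (iC : Cc -> DC) (iCs : Cs -> DC) (sC : DC -> DC),
   is_star_double phiC iC iCs sC ->
   forall iota : A -> Cc, alg_hom iota -> injective iota ->
     exists h : DA -> DC, star_hom sA sC h /\ injective h /\
        (forall a, h (iA a) = iC (iota a)) /\
        (forall a, h (iAs (phiA a)) = iCs (phiC (iota a)))) /\
  (* (3) *)
  (forall S : A -> Prop, unit_direct_sum S ->
     unit_direct_sum (image_sub phiA S) /\
     alternating_tensor_decomposition phiA S iA iAs) /\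
  (* (4) *)
  (forall (Ass : algType CC) (psi : As -> Ass), anti_iso psi ->
   forall (DAs : algType CC) (jAs : As -> DAs) (jAss : Ass -> DAs)
          (sAs : DAs -> DAs),
   is_star_double psi jAs jAss sAs ->
     exists f : DA -> DAs, star_iso sA sAs f) /\
  (* (5) *)
  (forall (Ass : algType CC) (psi : As -> Ass), anti_iso psi ->
   forall (DAs : algType CC) (jAs : As -> DAs) (jAss : Ass -> DAs)
          (sAs : DAs -> DAs),
   is_star_double psi jAs jAss sAs ->
   forall (DAst : algType CC) (chi : DA -> DAst), anti_iso chi ->
   forall (DDA : algType CC) (k1 : DA -> DDA) (k2 : DAst -> DDA)
          (sDD : DDA -> DDA),
   is_star_double chi k1 k2 sDD ->
   forall (P : algType CC) (sP : P -> P) (p1 : DA -> P) (p2 : DAs -> P),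
   is_star_free_product sA sAs sP p1 p2 ->
     exists f : DDA -> P, star_iso sDD sP f).
Proof.
split.
  move=> B Bs phiB hphiB DB iB iBs sB hDB rho hrho; split.
    exact: (p1_exists hphiA hDA hphiB hDB hrho).
  move=> h hh e1 e2; split; first exact: (p1_star hphiA hDA hDB hh e1 e2).
  move=> inj; exact: (p1_inj hphiA hDA hphiB hDB hrho inj hh e1 e2).
split.
  move=> Cc Cs phiC hphiC DC iC iCs sC hDC iota hiota inj.
  have [h [hh [e1 e2]]] := p1_exists hphiA hDA hphiC hDC hiota.
  exists h; split; first exact: (p1_star hphiA hDA hDC hh e1 e2).
  split; first exact: (p1_inj hphiA hDA hphiC hDC hiota inj hh e1 e2).
  by split.
split.
  move=> S hS; split; first exact: image_uds.
  exact: atd hphiA hS hDA.1.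
split.
  move=> Ass psi hpsi DAs jAs jAss sAs hDAs; exact: (part4 hphiA hDA hpsi hDAs).
move=> Ass psi hpsi DAs jAs jAss sAs hDAs DAst chi hchi DDA k1 k2 sDD hDDA P sP p1 p2 hP.
exact: (part5 hphiA hDA hpsi hDAs hchi hDDA hP).
Qed.
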